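(* Let $k\in\mathbb{Z}\setminus\{0\}$ and $0<x_0<1$. The complete spectrum of the eigenvalue problem $$L_k\Psi=\Phi,\qquad L_k\Phi=\mu\,\Phi,\qquad -x_0\le x\le x_0,$$ (i.e. the case $\epsilon=0$) for $\Psi$ in the space $X_0$ consists of isolated eigenvalues $\mu$ which are (i) real and strictly negative, and (ii) either simple or double, a double eigenvalue having two linearly independent eigenfunctions.
   Context: $L_k=\frac{d}{dx}\left[(1-x^2)\frac{d}{dx}\right]-\frac{k^2}{1-x^2}$. ${\cal H}_k([-x_0,x_0])$ is the space of functions with finite norm $\int_{-x_0}^{x_0}\left[(1-x^2)|\Psi'(x)|^2+\frac{k^2}{1-x^2}|\Psi(x)|^2\right]dx$ and $X_0=\{\Psi\in{\cal H}_k([-x_0,x_0]):\ \Psi(\pm x_0)=\Psi'(\pm x_0)=0\}$. A number $\mu\in\mathbb{C}$ is an eigenvalue if there is a nonzero $\Psi\in X_0$ solving the system classically on $[-x_0,x_0]$ with $\Phi=L_k\Psi$. *)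

(* Defs.v *)
From Stdlib Require Import Reals ZArith.
From Coquelicot Require Import Coquelicot.
Open Scope R_scope.

Definition Iv (x0 : R) (x : R) : Prop := - x0 <= x <= x0.

Definition deriv_on (x0 : R) (f f' : R -> C) : Prop :=
  forall x, Iv x0 x ->
    @filterdiff R_AbsRing R_NormedModule C_R_NormedModule f
      (within (Iv x0) (locally x)) (fun h : R => scal h (f' x)).

Definition Lk_eq (k : Z) (x0 : R) (F G : R -> C) : Prop :=
  exists F' W : R -> C,
    deriv_on x0 F F' /\
    deriv_on x0 (fun x => (RtoC (1 - x ^ 2) * F' x)%C) W /\
    forall x, Iv x0 x ->
      G x = (W x - RtoC (IZR k ^ 2 / (1 - x ^ 2)) * F x)%C.

(* Psi lies in H_k([-x0,x0]) (finite weighted H^1 norm) and in X_0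
   (Psi(+-x0) = Psi'(+-x0) = 0), and solves L_k Psi = Phi, L_k Phi = mu Phi
   classically on [-x0,x0] for some Phi. The zero function is allowed here,
   so that this describes the eigenspace (on [-x0,x0]). *)
Definition in_eigenspace (k : Z) (x0 : R) (mu : C) (Psi : R -> C) : Prop :=
  exists Psi' Phi : R -> C,
    deriv_on x0 Psi Psi' /\
    ex_RInt (fun x => (1 - x ^ 2) * (Cmod (Psi' x)) ^ 2
                       + IZR k ^ 2 / (1 - x ^ 2) * (Cmod (Psi x)) ^ 2)
            (- x0) x0 /\
    Psi (- x0) = 0%C /\ Psi x0 = 0%C /\
    Psi' (- x0) = 0%C /\ Psi' x0 = 0%C /\
    Lk_eq k x0 Psi Phi /\
    Lk_eq k x0 Phi (fun x => (mu * Phi x)%C).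

Definition is_eigenvalue (k : Z) (x0 : R) (mu : C) : Prop :=
  exists Psi : R -> C,
    in_eigenspace k x0 mu Psi /\ exists x, Iv x0 x /\ Psi x <> 0%C.

(* Main.v *)
Require Import Defs.
From Stdlib Require Import Reals ZArith Lra Lia Psatz Classical ClassicalEpsilon.
From Coquelicot Require Import Coquelicot.
Open Scope R_scope.


Definition cl (x0 x : R) := Rmax (- x0) (Rmin x x0).
Definition ex (x0 : R) (f : R -> R) := fun x => f (cl x0 x).
Definition pp (x : R) := 1 - x ^ 2.
Definition cf (kk x : R) := kk / (1 - x ^ 2).

Lemma cl_Iv x0 x : 0 <= x0 -> Iv x0 (cl x0 x).
Proof. intros H; unfold cl, Iv, Rmax, Rmin; repeat destruct Rle_dec; lra. Qed.
Lemma cl_id x0 x : Iv x0 x -> cl x0 x = x.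
Proof. unfold cl, Iv, Rmax, Rmin; intros; repeat destruct Rle_dec; lra. Qed.
Lemma cl_lip x0 x y : 0 <= x0 -> Rabs (cl x0 y - cl x0 x) <= Rabs (y - x).
Proof. intros H; unfold cl, Rmax, Rmin, Rabs; repeat destruct Rle_dec; repeat destruct Rcase_abs; lra. Qed.

Lemma cl_cont x0 x : 0 <= x0 -> continuity_pt (cl x0) x.
Proof.
  intros H0. unfold continuity_pt, continue_in, limit1_in, limit_in. simpl. unfold R_dist.
  intros eps Heps. exists eps; split; auto. intros y [_ Hy].
  eapply Rle_lt_trans. apply cl_lip; auto. auto.
Qed.

Lemma cl_loc x0 x : -x0 < x < x0 -> locally x (fun y => cl x0 y = y).
Proof.
  intros Hx. assert (Hm : 0 < Rmin (x + x0) (x0 - x)) by (apply Rmin_glb_lt; lra).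
  exists (mkposreal _ Hm). intros y Hy. change (Rabs (y - x) < Rmin (x + x0) (x0 - x)) in Hy.
  apply cl_id. unfold Iv. revert Hy. unfold Rmin, Rabs; repeat destruct Rle_dec; repeat destruct Rcase_abs; lra.
Qed.

Lemma ex_derive_int x0 f x l : -x0 < x < x0 -> is_derive f x l -> is_derive (ex x0 f) x l.
Proof.
  intros Hx Hd. apply is_derive_ext_loc with f; auto.
  generalize (cl_loc x0 x Hx). apply filter_imp. intros y Hy. unfold ex. now rewrite Hy.
Qed.

Definition CW x0 (f : R -> R) := forall x, Iv x0 x -> forall eps, 0 < eps ->
  exists d, 0 < d /\ forall y, Iv x0 y -> Rabs (y - x) < d -> Rabs (f y - f x) < eps.

Lemma CW_cont x0 f : 0 <= x0 -> CW x0 f -> forall x, continuity_pt (ex x0 f) x.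
Proof.
  intros H0 Hf x. unfold continuity_pt, continue_in, limit1_in, limit_in. simpl. unfold R_dist.
  intros eps Heps. destruct (Hf (cl x0 x) (cl_Iv _ _ H0) eps Heps) as [d [Hd Hd']].
  exists d; split; auto. intros y [_ Hy]. unfold ex. apply Hd'. apply cl_Iv; auto.
  eapply Rle_lt_trans. apply cl_lip; auto. auto.
Qed.

Definition DW x0 (f f' : R -> R) := forall x, Iv x0 x -> forall eps, 0 < eps ->
  exists d, 0 < d /\ forall y, Iv x0 y -> Rabs (y - x) < d ->
    Rabs (f y - f x - f' x * (y - x)) <= eps * Rabs (y - x).

Lemma DW_CW x0 f f' : DW x0 f f' -> CW x0 f.
Proof.
  intros H x Hx eps Heps. destruct (H x Hx 1 Rlt_0_1) as [d [Hd Hd']].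
  assert (HM : 0 < 1 + Rabs (f' x)) by (pose proof (Rabs_pos (f' x)); lra).
  set (M := 1 + Rabs (f' x)) in *.
  exists (Rmin d (eps / M)). split.
  { apply Rmin_glb_lt; auto. apply Rdiv_lt_0_compat; auto. }
  intros y Hy Hyx.
  assert (H1 := Hd' y Hy (Rlt_le_trans _ _ _ Hyx (Rmin_l _ _))).
  assert (H2 : Rabs (y-x) < eps / M) by (eapply Rlt_le_trans; [exact Hyx| apply Rmin_r]).
  assert (H3: Rabs (f' x * (y - x)) = Rabs (f' x) * Rabs (y-x)) by apply Rabs_mult.
  assert (H4 := Rabs_triang (f y - f x - f' x * (y - x)) (f' x * (y - x))).
  replace (f y - f x - f' x * (y - x) + f' x * (y - x)) with (f y - f x) in H4 by ring.
  assert (H5 : M * Rabs (y - x) < M * (eps / M)) by (apply Rmult_lt_compat_l; auto).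
  replace (M * (eps / M)) with eps in H5 by (field; lra).
  unfold M in H5. lra.
Qed.

Lemma DW_derive x0 f f' x : -x0 < x < x0 -> DW x0 f f' -> is_derive f x (f' x).
Proof.
  intros Hx H. apply is_derive_Reals. intros eps Heps.
  assert (Hx' : Iv x0 x) by (unfold Iv; lra).
  destruct (H x Hx' (eps/2) ltac:(lra)) as [d [Hd Hd']].
  assert (Hm : 0 < Rmin d (Rmin (x + x0) (x0 - x))) by (repeat apply Rmin_glb_lt; lra).
  exists (mkposreal _ Hm). intros h Hh0 Hh. simpl in Hh.
  assert (Hy : Iv x0 (x + h)).
  { unfold Iv. revert Hh. unfold Rmin, Rabs; repeat destruct Rle_dec; repeat destruct Rcase_abs; lra. }
  assert (Hh' : Rabs (x + h - x) < d).
  { replace (x + h - x) with h by ring. eapply Rlt_le_trans. exact Hh. apply Rmin_l. }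
  specialize (Hd' (x + h) Hy Hh'). replace (x + h - x) with h in Hd' by ring.
  replace ((f (x + h) - f x) / h - f' x) with ((f (x+h) - f x - f' x * h) / h) by (field; auto).
  rewrite Rabs_div by auto.
  assert (Hp : Rabs h > 0) by (apply Rabs_pos_lt; auto).
  apply Rle_lt_trans with (eps/2); [|lra].
  apply Rmult_le_reg_r with (Rabs h); auto. unfold Rdiv. rewrite Rmult_assoc, Rinv_l by lra. lra.
Qed.

Lemma DW_ext x0 f f' g g' : (forall x, Iv x0 x -> f x = g x) -> (forall x, Iv x0 x -> f' x = g' x) ->
  DW x0 f f' -> DW x0 g g'.
Proof.
  intros Ef Ef' H x Hx eps Heps. destruct (H x Hx eps Heps) as [d [Hd Hd']].
  exists d; split; auto. intros y Hy Hyx. rewrite <- !Ef, <- Ef'; auto.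
Qed.

Lemma DW_unique x0 f f1 f2 x : 0 < x0 -> DW x0 f f1 -> DW x0 f f2 -> Iv x0 x -> f1 x = f2 x.
Proof.
  intros H0 H1 H2 Hx. destruct (Req_dec (f1 x) (f2 x)) as [|Hne]; auto. exfalso.
  set (dl := Rabs (f1 x - f2 x)).
  assert (Hdl : 0 < dl) by (apply Rabs_pos_lt; lra).
  destruct (H1 x Hx (dl/4) ltac:(lra)) as [d1 [Hd1 Hd1']].
  destruct (H2 x Hx (dl/4) ltac:(lra)) as [d2 [Hd2 Hd2']].
  set (t := Rmin (Rmin d1 d2) x0 / 2).
  assert (Ht : 0 < t) by (unfold t; repeat apply Rmin_glb_lt; try apply Rmin_glb_lt; try lra;
     apply Rdiv_lt_0_compat; try lra; repeat apply Rmin_glb_lt; lra).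
  assert (Ht1 : t < d1) by (unfold t; unfold Rmin; repeat destruct Rle_dec; lra).
  assert (Ht2 : t < d2) by (unfold t; unfold Rmin; repeat destruct Rle_dec; lra).
  assert (Ht3 : t <= x0) by (unfold t; unfold Rmin; repeat destruct Rle_dec; lra).
  set (y := if Rle_dec x 0 then x + t else x - t).
  assert (Hy : Iv x0 y) by (unfold y, Iv in *; destruct Rle_dec; lra).
  assert (Hyx : Rabs (y - x) = t) by (unfold y; destruct Rle_dec;
     [replace (x + t - x) with t by ring | replace (x - t - x) with (- t) by ring; rewrite Rabs_Ropp];
     apply Rabs_right; lra).
  specialize (Hd1' y Hy ltac:(lra)). specialize (Hd2' y Hy ltac:(lra)).
  rewrite Hyx in *.
  assert (Htri := Rabs_triang (f y - f x - f2 x * (y - x)) (- (f y - f x - f1 x * (y - x)))).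
  rewrite Rabs_Ropp in Htri.
  replace (f y - f x - f2 x * (y - x) + - (f y - f x - f1 x * (y - x))) with ((f1 x - f2 x) * (y - x)) in Htri by ring.
  rewrite Rabs_mult, Hyx in Htri. fold dl in Htri. nra.
Qed.

Lemma im_le_Cmod (c : C) : Rabs (Im c) <= Cmod c.
Proof. eapply Rle_trans; [|apply Rmax_Cmod]. apply Rmax_r. Qed.

Lemma Re_expr (a b c : C) (t : R) :
  Re (@minus C_R_NormedModule (@minus C_R_NormedModule a b) (@scal _ C_R_NormedModule t c)) = Re a - Re b - Re c * t.
Proof. destruct a, b, c; compute -[Rmult Rplus Ropp Rminus]. ring. Qed.
Lemma Im_expr (a b c : C) (t : R) :
  Im (@minus C_R_NormedModule (@minus C_R_NormedModule a b) (@scal _ C_R_NormedModule t c)) = Im a - Im b - Im c * t.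
Proof. destruct a, b, c; compute -[Rmult Rplus Ropp Rminus]. ring. Qed.

Lemma deriv_on_DW x0 f f' : deriv_on x0 f f' ->
  DW x0 (fun x => Re (f x)) (fun x => Re (f' x)) /\ DW x0 (fun x => Im (f x)) (fun x => Im (f' x)).
Proof.
  intros H. split; intros x Hx eps Heps;
  destruct (H x Hx) as [_ Hd];
  (assert (Hl : is_filter_lim (within (Iv x0) (locally x)) x) by
    (intros P [d Hd']; exists d; intros y Hy _; apply Hd'; auto));
  destruct (Hd x Hl (mkposreal eps Heps)) as [d Hd'];
  exists d; (split; [apply cond_pos|]);
  intros y Hy Hyx; specialize (Hd' y Hyx Hy); simpl in Hd';
  change (norm (minus y x)) with (Rabs (y - x)) in Hd'; rewrite <- Cmod_norm in Hd'.
  - rewrite <- Re_expr.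
    eapply Rle_trans; [apply re_le_Cmod| exact Hd'].
  - rewrite <- Im_expr.
    eapply Rle_trans; [apply im_le_Cmod| exact Hd'].
Qed.


Lemma cont_to_C f x : continuity_pt f x -> continuous f x.
Proof. intros H; apply continuity_pt_filterlim; auto. Qed.

Lemma ex_RInt_c (h : R -> R) a b : (forall x, continuity_pt h x) -> ex_RInt h a b.
Proof. intros H. exact (@ex_RInt_continuous R_CompleteNormedModule h a b (fun z _ => cont_to_C _ _ (H z))). Qed.

Lemma RInt_derive_all (h : R -> R) a t : (forall x, continuity_pt h x) ->
  is_derive (fun t => RInt h a t) t (h t).
Proof.
  intros H. apply (is_derive_RInt h (fun t => RInt h a t) a t).
  apply filter_forall; intros; apply (@RInt_correct R_CompleteNormedModule); apply ex_RInt_c; auto.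
  apply cont_to_C; auto.
Qed.

Lemma derive_cont f x l : is_derive f x l -> continuity_pt f x.
Proof. intros H. apply continuity_pt_filterlim. apply (ex_derive_continuous f x). exists l; auto. Qed.

Lemma ftc (H h : R -> R) a b : a <= b -> (forall x, continuity_pt H x) -> (forall x, continuity_pt h x) ->
  (forall x, a < x < b -> is_derive H x (h x)) -> RInt h a b = H b - H a.
Proof.
  intros Hab HH Hh Hd.
  set (G := fun t => RInt h a t - H t).
  destruct (MVT_gen G a b (fun t => h t - h t)) as [c [_ Hc]].
  - intros x Hx. rewrite Rmin_left, Rmax_right in Hx by lra.
    apply (is_derive_minus _ _ _ _ _ (RInt_derive_all h a x Hh) (Hd x Hx)).
  - intros x _. apply continuity_pt_minus; auto. eapply derive_cont. apply RInt_derive_all; auto.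
  - assert (Hz : RInt h a a = 0) by (rewrite RInt_point; reflexivity).
    unfold G in Hc. rewrite Hz in Hc.
    replace ((h c - h c) * (b - a)) with 0 in Hc by ring. lra.
Qed.

Lemma mono (G dG : R -> R) a b : a <= b -> (forall x, continuity_pt G x) ->
  (forall x, a < x < b -> is_derive G x (dG x)) -> (forall x, a <= x <= b -> 0 <= dG x) -> G a <= G b.
Proof.
  intros Hab HG Hd Hp.
  destruct (MVT_gen G a b dG) as [c [Hc1 Hc]].
  - intros x Hx. rewrite Rmin_left, Rmax_right in Hx by lra. auto.
  - intros; auto.
  - rewrite Rmin_left, Rmax_right in Hc1 by lra. specialize (Hp c Hc1). nra.
Qed.

Lemma RInt_pos_pt (g : R -> R) a b x1 : a < b -> a <= x1 <= b -> (forall x, continuity_pt g x) ->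
  (forall x, 0 <= g x) -> 0 < g x1 -> 0 < RInt g a b.
Proof.
  intros Hab Hx1 Hc Hp Hg1.
  destruct (Hc x1 (g x1 / 2) ltac:(lra)) as [d [Hd Hd']]. simpl in Hd'. unfold R_dist in Hd'.
  set (c := Rmax a (x1 - d/2)). set (e := Rmin b (x1 + d/2)).
  assert (Hce : a <= c < e /\ e <= b /\ x1 - d < c /\ e < x1 + d).
  { unfold c, e, Rmax, Rmin; repeat destruct Rle_dec; lra. }
  assert (Hex : forall u v, ex_RInt g u v) by (intros; apply ex_RInt_c; auto).
  rewrite <- (RInt_Chasles g a c b) by auto.
  rewrite <- (RInt_Chasles g c e b) by auto.
  change (plus ?x ?y) with (x + y).
  assert (0 <= RInt g a c) by (apply RInt_ge_0; auto; lra).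
  assert (0 <= RInt g e b) by (apply RInt_ge_0; auto; lra).
  assert (0 < RInt g c e).
  { apply RInt_gt_0; try lra.
    - intros x Hx. destruct (Req_dec x x1) as [->|Hne]; [lra|].
      assert (Rabs (g x - g x1) < g x1 / 2).
      { apply Hd'. split; [split; [exact I | auto] |].
        unfold Rabs; destruct (Rcase_abs (x - x1)); lra. }
      revert H1. unfold Rabs; destruct (Rcase_abs (g x - g x1)); lra.
    - intros; apply cont_to_C; auto. }
  change (plus (RInt g c e) (RInt g e b)) with (RInt g c e + RInt g e b). lra.
Qed.

Lemma RInt_nonneg_zero (g : R -> R) a b x1 : a < b -> a <= x1 <= b -> (forall x, continuity_pt g x) ->
  (forall x, 0 <= g x) -> RInt g a b = 0 -> g x1 = 0.
Proof.
  intros. pose proof (H2 x1) as Hp. destruct (Rle_lt_or_eq_dec _ _ Hp); auto.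
  assert (0 < RInt g a b) by (eapply RInt_pos_pt; eauto). lra.
Qed.

Lemma RI_plus (f g : R -> R) a b : ex_RInt f a b -> ex_RInt g a b ->
  RInt (fun x => f x + g x) a b = RInt f a b + RInt g a b.
Proof. intros. exact (@RInt_plus R_CompleteNormedModule f g a b H H0). Qed.
Lemma RI_minus (f g : R -> R) a b : ex_RInt f a b -> ex_RInt g a b ->
  RInt (fun x => f x - g x) a b = RInt f a b - RInt g a b.
Proof. intros. exact (@RInt_minus R_CompleteNormedModule f g a b H H0). Qed.
Lemma RI_scal (f : R -> R) a b l : ex_RInt f a b ->
  RInt (fun x => l * f x) a b = l * RInt f a b.
Proof. intros. exact (@RInt_scal R_CompleteNormedModule f a b l H). Qed.
Lemma RI_const a b c : RInt (fun _ => c) a b = c * (b - a).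
Proof. rewrite (@RInt_const R_CompleteNormedModule). transitivity ((b - a) * c); [reflexivity | apply Rmult_comm]. Qed.
Lemma RI_ext (f g : R -> R) a b : (forall x, Rmin a b < x < Rmax a b -> f x = g x) -> RInt f a b = RInt g a b.
Proof. intros. exact (@RInt_ext R_CompleteNormedModule f g a b H). Qed.
Lemma RI_Chasles (f : R -> R) a b c : ex_RInt f a b -> ex_RInt f b c -> RInt f a b + RInt f b c = RInt f a c.
Proof. intros. exact (@RInt_Chasles R_CompleteNormedModule f a b c H H0). Qed.
Lemma RI_point (f : R -> R) a : RInt f a a = 0.
Proof. rewrite RInt_point. reflexivity. Qed.

Lemma cpc c x : continuity_pt (fun _ : R => c) x.
Proof. apply continuity_pt_const. intros ? ?; auto. Qed.

Lemma CS_alg (I1 I2 L : R) : 0 < L -> 0 <= I2 - 2 * (I1 / L) * I1 + (I1 / L) ^ 2 * L -> I1 ^ 2 <= L * I2.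
Proof.
  intros HL H0.
  replace (I2 - 2 * (I1 / L) * I1 + (I1 / L) ^ 2 * L) with (I2 - I1 ^ 2 / L) in H0 by (field; lra).
  assert (I1 ^ 2 / L * L = I1 ^ 2) by (field; lra). nra.
Qed.

Lemma CS (f : R -> R) a b : a <= b -> (forall x, continuity_pt f x) ->
  (RInt f a b) ^ 2 <= (b - a) * RInt (fun x => f x ^ 2) a b.
Proof.
  intros Hab Hc. destruct (Rle_lt_or_eq_dec _ _ Hab) as [Hlt|Heq].
  2:{ subst. rewrite !RI_point. lra. }
  set (m := RInt f a b / (b - a)).
  assert (Hex : forall h, (forall x, continuity_pt h x) -> ex_RInt h a b) by (intros; apply ex_RInt_c; auto).
  assert (Hc2 : forall x, continuity_pt (fun x => f x ^ 2) x) by (intros; apply continuity_pt_mult; auto;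
     apply continuity_pt_mult; auto; apply cpc).
  assert (H0 : 0 <= RInt (fun x => f x ^ 2 - 2 * m * f x + m ^ 2) a b).
  { apply RInt_ge_0; auto. apply Hex. intros. apply continuity_pt_plus. apply continuity_pt_minus; auto.
    apply continuity_pt_scal; auto. apply cpc.
    intros x _. replace (f x ^ 2 - 2 * m * f x + m ^ 2) with ((f x - m) ^ 2) by ring. apply pow2_ge_0. }
  rewrite RI_plus, RI_minus, RI_scal, RI_const in H0; auto.
  2:{ apply Hex. intros; apply continuity_pt_scal; auto. }
  2:{ apply Hex. intros; apply continuity_pt_minus; auto; apply continuity_pt_scal; auto. }
  2:{ apply Hex. intros; apply cpc. }
  apply CS_alg; [lra|]. unfold m in H0. exact H0.
Qed.


Definition Reg x0 kk (u u' F : R -> R) :=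
  (forall x, continuity_pt (ex x0 u) x) /\
  (forall x, continuity_pt (ex x0 (fun y => pp y * u' y)) x) /\
  (forall x, continuity_pt (ex x0 F) x) /\
  (forall x, -x0 < x < x0 -> is_derive u x (u' x)) /\
  (forall x, -x0 < x < x0 -> is_derive (fun y => pp y * u' y) x (F x + cf kk x * u x)).

Lemma pp_pos x0 x : 0 < x0 < 1 -> pp (cl x0 x) >= 1 - x0 ^ 2 /\ 1 - x0 ^ 2 > 0.
Proof.
  intros H. pose proof (cl_Iv x0 x ltac:(lra)) as Hc. unfold Iv in Hc. unfold pp.
  set (y := cl x0 x) in *. split; nra.
Qed.

Lemma ex_pp_cont x0 x : 0 <= x0 -> continuity_pt (ex x0 pp) x.
Proof.
  intros H. unfold ex. apply (continuity_pt_comp (cl x0) pp). apply cl_cont; auto.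
  unfold pp; reg.
Qed.

Lemma ex_cf_cont x0 kk x : 0 < x0 < 1 -> continuity_pt (ex x0 (cf kk)) x.
Proof.
  intros H. unfold ex. apply (continuity_pt_comp (cl x0) (cf kk)). apply cl_cont; lra.
  unfold cf. apply continuity_pt_div. apply cpc. reg.
  destruct (pp_pos x0 x H). unfold pp in *. lra.
Qed.

Lemma ex_div_cont x0 (f : R -> R) x : 0 < x0 < 1 -> continuity_pt (ex x0 (fun y => pp y * f y)) x ->
  continuity_pt (ex x0 f) x.
Proof.
  intros H Hc. apply continuity_pt_ext with (f := fun x => ex x0 (fun y => pp y * f y) x / ex x0 pp x).
  - intros y. unfold ex. destruct (pp_pos x0 y H). field. lra.
  - apply continuity_pt_div; auto. apply ex_pp_cont; lra. unfold ex. destruct (pp_pos x0 x H). lra.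
Qed.

Lemma Reg_d_cont x0 kk u u' F x : 0 < x0 < 1 -> Reg x0 kk u u' F -> continuity_pt (ex x0 u') x.
Proof. intros H [_ [Hc _]]. apply ex_div_cont; auto. Qed.

Lemma derive_mult_R f g x df dg : is_derive f x df -> is_derive g x dg ->
  is_derive (fun t => f t * g t) x (df * g x + f x * dg).
Proof. intros H1 H2. exact (is_derive_mult f g x df dg H1 H2 Rmult_comm). Qed.

Definition Bf x0 kk (f f' g g' : R -> R) : R :=
  RInt (fun x => ex x0 (fun y => pp y * f' y) x * ex x0 g' x + ex x0 (cf kk) x * ex x0 f x * ex x0 g x) (- x0) x0.

Definition Ip x0 (f g : R -> R) : R := RInt (fun x => ex x0 f x * ex x0 g x) (- x0) x0.

Lemma green x0 kk f f' F g g' G : 0 < x0 < 1 -> Reg x0 kk f f' F -> Reg x0 kk g g' G ->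
  Ip x0 F g = pp x0 * f' x0 * g x0 - pp (-x0) * f' (-x0) * g (-x0) - Bf x0 kk f f' g g'.
Proof.
  intros H0 Rf Rg.
  pose proof (Reg_d_cont _ _ _ _ _ 0 H0 Rg) as _.
  assert (Cg' := fun x => Reg_d_cont _ _ _ _ _ x H0 Rg).
  destruct Rf as [Cf [Cpf [CF [Df DpF]]]]. destruct Rg as [Cg [Cpg [CG [Dg DpG]]]].
  set (H := fun x => ex x0 (fun y => pp y * f' y) x * ex x0 g x).
  set (h := fun x => (ex x0 F x + ex x0 (cf kk) x * ex x0 f x) * ex x0 g x + ex x0 (fun y => pp y * f' y) x * ex x0 g' x).
  assert (Hcf := fun x => ex_cf_cont x0 kk x H0).
  assert (E : RInt h (-x0) x0 = H x0 - H (-x0)).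
  { apply ftc; [lra| | |].
    - intros x. unfold H. apply continuity_pt_mult; auto.
    - intros x. unfold h. apply continuity_pt_plus; apply continuity_pt_mult; auto.
      apply continuity_pt_plus; auto. apply continuity_pt_mult; auto.
    - intros x Hx. unfold H, h.
      assert (Hc : cl x0 x = x) by (apply cl_id; unfold Iv; lra).
      pose proof (derive_mult_R _ _ x _ _ (ex_derive_int x0 _ x _ Hx (DpF x Hx)) (ex_derive_int x0 _ x _ Hx (Dg x Hx))) as D.
      unfold ex in *. rewrite !Hc. rewrite Hc in D. exact D. }
  assert (E2 : RInt h (-x0) x0 = Ip x0 F g + Bf x0 kk f f' g g').
  { unfold h, Ip, Bf.
    rewrite (RI_ext _ (fun x => ex x0 F x * ex x0 g x + (ex x0 (fun y => pp y * f' y) x * ex x0 g' x + ex x0 (cf kk) x * ex x0 f x * ex x0 g x))) by (intros; ring).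
    apply RI_plus.
    + apply ex_RInt_c. intros; apply continuity_pt_mult; auto.
    + apply ex_RInt_c. intros; apply continuity_pt_plus; apply continuity_pt_mult; auto; apply continuity_pt_mult; auto. }
  unfold H, ex in E. rewrite !cl_id in E by (unfold Iv; lra).
  lra.
Qed.

Lemma Bf_sym x0 kk f f' g g' : Bf x0 kk f f' g g' = Bf x0 kk g g' f f'.
Proof. unfold Bf. apply RI_ext. intros x _. unfold ex. ring. Qed.

Lemma green0 x0 kk f f' F g g' G : 0 < x0 < 1 -> Reg x0 kk f f' F -> Reg x0 kk g g' G ->
  g x0 = 0 -> g (-x0) = 0 -> Ip x0 F g = - Bf x0 kk f f' g g'.
Proof. intros. rewrite (green x0 kk f f' F g g' G); auto. rewrite H2, H3. ring. Qed.

Lemma green0' x0 kk f f' F g g' G : 0 < x0 < 1 -> Reg x0 kk f f' F -> Reg x0 kk g g' G ->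
  f' x0 = 0 -> f' (-x0) = 0 -> Ip x0 F g = - Bf x0 kk f f' g g'.
Proof. intros. rewrite (green x0 kk f f' F g g' G); auto. rewrite H2, H3. ring. Qed.


Lemma is_derive_val (f : R -> R) (x l1 l2 : R) : l1 = l2 -> is_derive f x l1 -> is_derive f x l2.
Proof. intros ->; auto. Qed.

Lemma is_derive_lin (f g : R -> R) x df dg (al be : R) : is_derive f x df -> is_derive g x dg ->
  is_derive (fun t => al * f t + be * g t) x (al * df + be * dg).
Proof.
  intros H1 H2.
  exact (is_derive_plus _ _ x _ _ (is_derive_scal f x al df H1) (is_derive_scal g x be dg H2)).
Qed.

Lemma Reg_ext x0 kk u u' F v v' G : 0 <= x0 ->
  (forall x, Iv x0 x -> u x = v x) -> (forall x, Iv x0 x -> u' x = v' x) -> (forall x, Iv x0 x -> F x = G x) ->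
  Reg x0 kk u u' F -> Reg x0 kk v v' G.
Proof.
  intros H0 Eu Eu' EF [Cu [Cpu [CF [Du DpU]]]].
  assert (Eex : forall (f g : R -> R), (forall x, Iv x0 x -> f x = g x) -> forall x, ex x0 f x = ex x0 g x).
  { intros f g E x. unfold ex. apply E, cl_Iv; auto. }
  assert (Hloc : forall (f g : R -> R) x, (forall x, Iv x0 x -> f x = g x) -> -x0 < x < x0 -> locally x (fun t => f t = g t)).
  { intros f g x E Hx. generalize (cl_loc x0 x Hx). apply filter_imp. intros y Hy. apply E. rewrite <- Hy. apply cl_Iv; auto. }
  assert (Hiv : forall x, -x0 < x < x0 -> Iv x0 x) by (unfold Iv; intros; lra).
  split; [|split; [|split; [|split]]].
  - intros x. apply continuity_pt_ext with (ex x0 u); auto.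
  - intros x. apply continuity_pt_ext with (ex x0 (fun y => pp y * u' y)); auto.
    apply Eex. intros; rewrite Eu'; auto.
  - intros x. apply continuity_pt_ext with (ex x0 F); auto.
  - intros x Hx. rewrite <- Eu'; auto. apply is_derive_ext_loc with u; auto.
  - intros x Hx. rewrite <- EF, <- Eu; auto. apply is_derive_ext_loc with (fun y => pp y * u' y); auto.
    apply Hloc; auto. intros; rewrite Eu'; auto.
Qed.

Lemma Reg_lin x0 kk f f' F g g' G al be : Reg x0 kk f f' F -> Reg x0 kk g g' G ->
  Reg x0 kk (fun x => al * f x + be * g x) (fun x => al * f' x + be * g' x) (fun x => al * F x + be * G x).
Proof.
  intros [Cf [Cpf [CF [Df DpF]]]] [Cg [Cpg [CG [Dg DpG]]]].
  split; [|split; [|split; [|split]]].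
  - intros x. unfold ex. apply continuity_pt_plus; apply continuity_pt_scal; auto.
  - intros x. apply continuity_pt_ext with (fun x => al * ex x0 (fun y => pp y * f' y) x + be * ex x0 (fun y => pp y * g' y) x).
    intros; unfold ex; ring. apply continuity_pt_plus; apply continuity_pt_scal; auto.
  - intros x. unfold ex. apply continuity_pt_plus; apply continuity_pt_scal; auto.
  - intros x Hx. apply is_derive_lin; auto.
  - intros x Hx. apply is_derive_val with (al * (F x + cf kk x * f x) + be * (G x + cf kk x * g x)).
    ring.
    eapply is_derive_ext. 2:{ apply (is_derive_lin _ _ x _ _ al be (DpF x Hx) (DpG x Hx)). }
    intros; simpl; ring.
Qed.

Lemma Reg_zero x0 kk : Reg x0 kk (fun _ => 0) (fun _ => 0) (fun _ => 0).
Proof.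
  split; [|split; [|split; [|split]]]; intros; unfold ex; try apply cpc.
  - apply continuity_pt_ext with (fun _ => 0). intros; ring. apply cpc.
  - auto_derive; auto.
  - apply is_derive_val with 0. ring.
    eapply is_derive_ext with (fun _ => 0). intros; simpl; ring. auto_derive; auto.
Qed.

Fixpoint sm (n : nat) (f : nat -> R) : R :=
  match n with O => 0 | S n => sm n f + f n end.

Lemma sm_ext n f g : (forall j, (j < n)%nat -> f j = g j) -> sm n f = sm n g.
Proof. induction n; simpl; intros; auto. rewrite IHn, H; auto. Qed.

Lemma Reg_sum x0 kk n (al : nat -> R) (u u' F : nat -> R -> R) : 0 <= x0 ->
  (forall j, (j < n)%nat -> Reg x0 kk (u j) (u' j) (F j)) ->
  Reg x0 kk (fun x => sm n (fun j => al j * u j x)) (fun x => sm n (fun j => al j * u' j x))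
     (fun x => sm n (fun j => al j * F j x)).
Proof.
  intros H0. induction n; intros H.
  - simpl. apply Reg_zero.
  - simpl. assert (IH := IHn (fun j Hj => H j ltac:(lia))).
    assert (Hn := H n ltac:(lia)).
    eapply Reg_ext; [auto| | | | apply (Reg_lin _ _ _ _ _ _ _ _ 1 (al n) IH Hn)]; intros; simpl; ring.
Qed.


Lemma two_prod s y z M : Rabs s <= M -> 2 * s * y * z >= - M * (y ^ 2 + z ^ 2).
Proof.
  intros H. assert (0 <= y ^ 2 + z ^ 2) by nra.
  assert (Hs : 2 * s * y * z >= - Rabs s * (y ^ 2 + z ^ 2)).
  { unfold Rabs; destruct Rcase_abs.
    - assert (0 <= - s * (y - z) ^ 2) by (apply Rmult_le_pos; [lra| apply pow2_ge_0]). nra.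
    - assert (0 <= s * (y + z) ^ 2) by (apply Rmult_le_pos; [lra| apply pow2_ge_0]). nra. }
  nra.
Qed.

Lemma gron_alg y1 y2 y3 y4 al ec a M : 0 <= al <= M -> 0 <= ec <= M -> Rabs a + ec <= M -> 1 <= M ->
  2 * (y1 * (y2 * al) + y2 * (y3 + ec * y1) + y3 * (y4 * al) + y4 * (a * y3 + ec * y3))
  + 5 * M * (y1 ^ 2 + y2 ^ 2 + y3 ^ 2 + y4 ^ 2) >= 0.
Proof.
  intros H1 H2 H3 H4.
  assert (A1 := two_prod al y1 y2 M ltac:(rewrite Rabs_right; lra)).
  assert (A2 := two_prod 1 y2 y3 M ltac:(rewrite Rabs_R1; lra)).
  assert (A3 := two_prod ec y1 y2 M ltac:(rewrite Rabs_right; lra)).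
  assert (A4 := two_prod al y3 y4 M ltac:(rewrite Rabs_right; lra)).
  assert (A5 := two_prod (a + ec) y3 y4 M ltac:(eapply Rle_trans; [apply Rabs_triang| rewrite (Rabs_right ec); lra])).
  assert (0 <= M * y1 ^ 2) by (apply Rmult_le_pos; [lra|apply pow2_ge_0]).
  assert (0 <= M * y2 ^ 2) by (apply Rmult_le_pos; [lra|apply pow2_ge_0]).
  assert (0 <= M * y3 ^ 2) by (apply Rmult_le_pos; [lra|apply pow2_ge_0]).
  assert (0 <= M * y4 ^ 2) by (apply Rmult_le_pos; [lra|apply pow2_ge_0]).
  nra.
Qed.

Lemma sq_cont (f : R -> R) x : continuity_pt f x -> continuity_pt (fun t => f t ^ 2) x.
Proof. intros H. apply continuity_pt_mult; auto. apply continuity_pt_mult; auto. apply cpc. Qed.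

Lemma is_derive_plusR (f g : R -> R) (x df dg : R) : is_derive f x df -> is_derive g x dg ->
  is_derive (fun t => f t + g t) x (df + dg).
Proof. intros H1 H2. exact (is_derive_plus f g x df dg H1 H2). Qed.

Lemma is_derive_sq (f : R -> R) (x l : R) : is_derive f x l -> is_derive (fun t => f t ^ 2) x (2 * f x * l).
Proof.
  intros H. apply is_derive_val with (l * f x + f x * l). ring.
  eapply is_derive_ext; [|apply (derive_mult_R f f x l l H H)]. intros; simpl; ring.
Qed.

Lemma ex_int x0 (f : R -> R) x : -x0 < x < x0 -> ex x0 f x = f x.
Proof. intros. unfold ex. rewrite cl_id; auto. unfold Iv; lra. Qed.

Lemma ex_derive_int' x0 (f : R -> R) (x l1 l2 : R) : -x0 < x < x0 -> l1 = l2 -> is_derive f x l1 -> is_derive (ex x0 f) x l2.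
Proof. intros H <- D. apply ex_derive_int; auto. Qed.

Lemma cf_bound x0 kk x : 0 < x0 < 1 -> 0 <= kk -> 0 <= ex x0 (cf kk) x <= kk / (1 - x0 ^ 2).
Proof.
  intros H Hk. destruct (pp_pos x0 x H) as [H1 H2]. unfold ex, cf. unfold pp in H1.
  split. apply Rdiv_le_0_compat; lra.
  unfold Rdiv. apply Rmult_le_compat_l; auto. apply Rinv_le_contravar; lra.
Qed.

Lemma inv_pp_bound x0 x : 0 < x0 < 1 -> 0 <= / ex x0 pp x <= 1 / (1 - x0 ^ 2).
Proof.
  intros H. destruct (pp_pos x0 x H) as [H1 H2]. unfold ex.
  split. left; apply Rinv_0_lt_compat; lra.
  unfold Rdiv. rewrite Rmult_1_l. apply Rinv_le_contravar; lra.
Qed.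

Lemma uniq x0 kk a u u' P P' : 0 < x0 < 1 -> 0 <= kk ->
  Reg x0 kk u u' P -> Reg x0 kk P P' (fun x => a * P x) ->
  u x0 = 0 -> u' x0 = 0 -> P x0 = 0 -> P' x0 = 0 -> forall x, Iv x0 x -> u x = 0.
Proof.
  intros H0 Hk R1 R2 Hu Hu' HP HP' x Hx.
  assert (Cd1 := fun x => Reg_d_cont _ _ _ _ _ x H0 R1).
  assert (Cd2 := fun x => Reg_d_cont _ _ _ _ _ x H0 R2).
  destruct R1 as [C1 [C2 [C3 [D1 D2]]]]. destruct R2 as [_ [C4 [_ [D3 D4]]]].
  set (y1 := ex x0 u). set (y2 := ex x0 (fun y => pp y * u' y)). set (y3 := ex x0 P).
  set (y4 := ex x0 (fun y => pp y * P' y)).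
  set (al := fun x => / ex x0 pp x). set (ec := ex x0 (cf kk)).
  set (M := 1 + Rabs a + (1 + kk) / (1 - x0 ^ 2)).
  assert (Hx0 : 1 - x0 ^ 2 > 0) by nra.
  assert (HM1 : 1 <= M) by (unfold M; pose proof (Rabs_pos a); assert (0 <= (1 + kk) / (1 - x0 ^ 2)) by (apply Rdiv_le_0_compat; lra); lra).
  set (K := 5 * M).
  set (g := fun x => y1 x ^ 2 + y2 x ^ 2 + y3 x ^ 2 + y4 x ^ 2).
  set (dg := fun x => 2 * (y1 x * (y2 x * al x) + y2 x * (y3 x + ec x * y1 x) + y3 x * (y4 x * al x)
                       + y4 x * (a * y3 x + ec x * y3 x))).
  set (G := fun x => g x * exp (K * x)).
  assert (HG : G x <= G x0).
  { apply mono with (dG := fun x => (dg x + K * g x) * exp (K * x)).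
    - destruct Hx; auto.
    - intros t. unfold G, g. apply continuity_pt_mult.
      repeat apply continuity_pt_plus; apply sq_cont; auto.
      apply derivable_continuous_pt. reg.
    - intros t Ht. assert (Ht' : -x0 < t < x0) by (unfold Iv in Hx; lra).
      assert (Hpt : pp t <> 0) by (destruct (pp_pos x0 t H0); rewrite <- (ex_int x0 pp t Ht'); unfold ex in *; lra).
      unfold G. apply is_derive_val with (dg t * exp (K * t) + g t * (K * exp (K * t))). ring.
      apply (derive_mult_R g (fun s => exp (K * s))).
      + unfold g, dg. apply is_derive_val with (2 * y1 t * (y2 t * al t) + 2 * y2 t * (y3 t + ec t * y1 t)
              + 2 * y3 t * (y4 t * al t) + 2 * y4 t * (a * y3 t + ec t * y3 t)). ring.
        repeat apply is_derive_plusR; apply is_derive_sq.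
        * unfold y1. apply ex_derive_int' with (u' t); auto.
          unfold y2, al. rewrite !ex_int by auto. field. auto.
        * unfold y2. apply ex_derive_int' with (P t + cf kk t * u t); auto.
          unfold y3, ec, y1. rewrite !ex_int by auto. ring.
        * unfold y3. apply ex_derive_int' with (P' t); auto.
          unfold y4, al. rewrite !ex_int by auto. field. auto.
        * unfold y4. apply ex_derive_int' with (a * P t + cf kk t * P t); auto.
          unfold y3, ec. rewrite !ex_int by auto. ring.
      + auto_derive; auto. ring.
    - intros t _. apply Rmult_le_pos; [|left; apply exp_pos].
      unfold dg, g, K.
      destruct (cf_bound x0 kk t H0 Hk) as [Hc1 Hc2]. destruct (inv_pp_bound x0 t H0) as [Hi1 Hi2].
      change (ex x0 (cf kk) t) with (ec t) in Hc1, Hc2. change (/ ex x0 pp t) with (al t) in Hi1, Hi2.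
      assert (kk / (1 - x0 ^ 2) <= M) by (unfold M; unfold Rdiv in *; pose proof (Rabs_pos a);
        assert (0 <= / (1 - x0 ^ 2)) by (left; apply Rinv_0_lt_compat; lra); nra).
      assert (1 / (1 - x0 ^ 2) <= M) by (unfold M; unfold Rdiv in *; pose proof (Rabs_pos a);
        assert (0 <= / (1 - x0 ^ 2)) by (left; apply Rinv_0_lt_compat; lra); nra).
      assert (Rabs a + ec t <= M) by (unfold M; unfold Rdiv in *;
        assert (0 <= / (1 - x0 ^ 2)) by (left; apply Rinv_0_lt_compat; lra); nra).
      pose proof (gron_alg (y1 t) (y2 t) (y3 t) (y4 t) (al t) (ec t) a M
        ltac:(lra) ltac:(lra) ltac:(auto) HM1). lra. }
  assert (HG0 : G x0 = 0).
  { unfold G, g, y1, y2, y3, y4, ex. rewrite cl_id by (unfold Iv; lra). rewrite Hu, Hu', HP, HP'. ring. }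
  assert (Hg : 0 <= g x) by (unfold g; pose proof (pow2_ge_0 (y1 x)); pose proof (pow2_ge_0 (y2 x));
     pose proof (pow2_ge_0 (y3 x)); pose proof (pow2_ge_0 (y4 x)); lra).
  assert (He := exp_pos (K * x)).
  assert (g x = 0) by (unfold G in *; nra).
  unfold g in H. pose proof (pow2_ge_0 (y1 x)); pose proof (pow2_ge_0 (y2 x));
     pose proof (pow2_ge_0 (y3 x)); pose proof (pow2_ge_0 (y4 x)).
  assert (y1 x ^ 2 = 0) by lra. unfold y1, ex in H5. rewrite cl_id in H5 by auto. nra.
Qed.


Lemma Reg_cont x0 kk u u' F x : Reg x0 kk u u' F -> continuity_pt (ex x0 u) x.
Proof. intros [H _]; auto. Qed.
Lemma Reg_contF x0 kk u u' F x : Reg x0 kk u u' F -> continuity_pt (ex x0 F) x.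
Proof. intros [_ [_ [H _]]]; auto. Qed.

Lemma Ip_lin x0 (f g h : R -> R) al be : (forall x, continuity_pt (ex x0 f) x) ->
  (forall x, continuity_pt (ex x0 g) x) -> (forall x, continuity_pt (ex x0 h) x) ->
  Ip x0 (fun x => al * f x + be * g x) h = al * Ip x0 f h + be * Ip x0 g h.
Proof.
  intros Cf Cg Ch. unfold Ip.
  rewrite (RI_ext _ (fun x => al * (ex x0 f x * ex x0 h x) + be * (ex x0 g x * ex x0 h x))) by (intros; unfold ex; ring).
  rewrite RI_plus, !RI_scal; auto; apply ex_RInt_c; intros; try apply continuity_pt_scal; apply continuity_pt_mult; auto.
Qed.

Lemma Ip_comm x0 f g : Ip x0 f g = Ip x0 g f.
Proof. unfold Ip. apply RI_ext. intros; ring. Qed.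

Lemma Ip_nonneg x0 f : 0 < x0 -> (forall x, continuity_pt (ex x0 f) x) -> 0 <= Ip x0 f f.
Proof.
  intros H0 Cf. unfold Ip. apply RInt_ge_0. lra. apply ex_RInt_c. intros; apply continuity_pt_mult; auto.
  intros. apply Rle_0_sqr.
Qed.

Lemma Ip_zero x0 f : 0 < x0 -> (forall x, continuity_pt (ex x0 f) x) -> Ip x0 f f = 0 ->
  forall x, Iv x0 x -> f x = 0.
Proof.
  intros H0 Cf HI x Hx.
  assert (ex x0 f x * ex x0 f x = 0).
  { eapply (RInt_nonneg_zero (fun x => ex x0 f x * ex x0 f x) (-x0) x0); eauto. lra.
    intros; apply continuity_pt_mult; auto. intros; apply Rle_0_sqr. }
  unfold ex in H. rewrite cl_id in H by auto. nra.
Qed.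

Lemma Bf_integrand_nonneg x0 kk f f' x : 0 < x0 < 1 -> 0 <= kk ->
  0 <= ex x0 (fun y => pp y * f' y) x * ex x0 f' x + ex x0 (cf kk) x * ex x0 f x * ex x0 f x.
Proof.
  intros H0 Hk. destruct (pp_pos x0 x H0). destruct (cf_bound x0 kk x H0 Hk).
  unfold ex in *. 
  replace (pp (cl x0 x) * f' (cl x0 x) * f' (cl x0 x)) with (pp (cl x0 x) * (f' (cl x0 x) * f' (cl x0 x))) by ring.
  assert (0 <= f' (cl x0 x) * f' (cl x0 x)) by apply Rle_0_sqr.
  assert (0 <= f (cl x0 x) * f (cl x0 x)) by apply Rle_0_sqr.
  assert (0 <= pp (cl x0 x) * (f' (cl x0 x) * f' (cl x0 x))) by (apply Rmult_le_pos; lra).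
  assert (0 <= cf kk (cl x0 x) * (f (cl x0 x) * f (cl x0 x))) by (apply Rmult_le_pos; lra).
  nra.
Qed.

Lemma Bf_cont x0 kk f f' F x : 0 < x0 < 1 -> Reg x0 kk f f' F ->
  continuity_pt (fun x => ex x0 (fun y => pp y * f' y) x * ex x0 f' x + ex x0 (cf kk) x * ex x0 f x * ex x0 f x) x.
Proof.
  intros H0 R. pose proof (Reg_d_cont _ _ _ _ _ x H0 R). destruct R as [C1 [C2 _]].
  apply continuity_pt_plus; [apply continuity_pt_mult; auto|].
  apply continuity_pt_mult; auto. apply continuity_pt_mult; auto. apply ex_cf_cont; auto.
Qed.

Lemma En_nonneg x0 kk f f' F : 0 < x0 < 1 -> 0 <= kk -> Reg x0 kk f f' F -> 0 <= Bf x0 kk f f' f f'.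
Proof.
  intros H0 Hk R. unfold Bf. apply RInt_ge_0. lra. apply ex_RInt_c. intros; apply (Bf_cont _ _ _ _ F); auto.
  intros; apply Bf_integrand_nonneg; auto.
Qed.

Lemma En_pos x0 kk f f' F x1 : 0 < x0 < 1 -> 0 < kk -> Reg x0 kk f f' F -> Iv x0 x1 -> f x1 <> 0 ->
  0 < Bf x0 kk f f' f f'.
Proof.
  intros H0 Hk R Hx1 Hf. unfold Bf. apply RInt_pos_pt with x1. lra. auto.
  intros; apply (Bf_cont _ _ _ _ F); auto. intros; apply Bf_integrand_nonneg; auto; lra.
  destruct (pp_pos x0 x1 H0). unfold ex, cf. rewrite cl_id in * by auto. unfold pp in *.
  assert (0 < f x1 * f x1) by (apply Rsqr_pos_lt; auto).
  assert (0 <= (1 - x1 ^ 2) * f' x1 * f' x1) by (rewrite Rmult_assoc; apply Rmult_le_pos; [lra|apply Rle_0_sqr]).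
  assert (0 < kk / (1 - x1 ^ 2)) by (apply Rdiv_lt_0_compat; lra).
  assert (0 < kk / (1 - x1 ^ 2) * (f x1 * f x1)) by (apply Rmult_lt_0_compat; auto).
  nra.
Qed.

Lemma real_neg x0 kk a b u u' v v' P P' Q Q' : 0 < x0 < 1 -> 0 < kk ->
  Reg x0 kk u u' P -> Reg x0 kk v v' Q ->
  Reg x0 kk P P' (fun x => a * P x - b * Q x) -> Reg x0 kk Q Q' (fun x => b * P x + a * Q x) ->
  u x0 = 0 -> u (-x0) = 0 -> v x0 = 0 -> v (-x0) = 0 ->
  u' x0 = 0 -> u' (-x0) = 0 -> v' x0 = 0 -> v' (-x0) = 0 ->
  (exists x1, Iv x0 x1 /\ (u x1 <> 0 \/ v x1 <> 0)) -> b = 0 /\ a < 0.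
Proof.
  intros H0 Hk Ru Rv RP RQ u1 u2 v1 v2 u3 u4 v3 v4 [x1 [Hx1 Hne]].
  assert (Hk' : 0 <= kk) by lra.
  assert (RP' : Reg x0 kk P P' (fun x => a * P x + (- b) * Q x)) by (eapply Reg_ext; [lra| | | |exact RP]; intros; simpl; auto; ring).
  set (FP := fun x => a * P x + (- b) * Q x) in RP'. set (FQ := fun x => b * P x + a * Q x) in RQ.
  assert (E1 : Ip x0 P u = - Bf x0 kk u u' u u') by (eapply green0; eauto).
  assert (E2 : Ip x0 Q v = - Bf x0 kk v v' v v') by (eapply green0; eauto).
  assert (E3 : Ip x0 P v = - Bf x0 kk u u' v v') by (eapply green0; eauto).
  assert (E4 : Ip x0 Q u = - Bf x0 kk u u' v v') by (rewrite Bf_sym; eapply green0; eauto).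
  assert (F1 : Ip x0 FP u = Ip x0 P P).
  { rewrite (green0 x0 kk P P' FP u u' P); auto. rewrite (green0' x0 kk u u' P P P' FP); auto. apply f_equal, Bf_sym. }
  assert (F2 : Ip x0 FQ v = Ip x0 Q Q).
  { rewrite (green0 x0 kk Q Q' FQ v v' Q); auto. rewrite (green0' x0 kk v v' Q Q Q' FQ); auto. apply f_equal, Bf_sym. }
  assert (F3 : Ip x0 FQ u = Ip x0 P Q).
  { rewrite (green0 x0 kk Q Q' FQ u u' P); auto. rewrite (green0' x0 kk u u' P Q Q' FQ); auto. apply f_equal, Bf_sym. }
  assert (F4 : Ip x0 FP v = Ip x0 Q P).
  { rewrite (green0 x0 kk P P' FP v v' Q); auto. rewrite (green0' x0 kk v v' Q P P' FP); auto. apply f_equal, Bf_sym. }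
  assert (CP := fun x => Reg_cont _ _ _ _ _ x RP). assert (CQ := fun x => Reg_cont _ _ _ _ _ x RQ).
  assert (Cu := fun x => Reg_cont _ _ _ _ _ x Ru). assert (Cv := fun x => Reg_cont _ _ _ _ _ x Rv).
  unfold FP, FQ in F1, F2, F3, F4. rewrite Ip_lin in F1, F2, F3, F4; auto.
  rewrite (Ip_comm x0 Q P) in F4.
  set (Eu := Bf x0 kk u u' u u') in *. set (Ev := Bf x0 kk v v' v v') in *. set (Buv := Bf x0 kk u u' v v') in *.
  assert (Hpos : 0 < Eu + Ev).
  { assert (0 <= Eu) by (apply (En_nonneg _ _ _ _ P); auto).
    assert (0 <= Ev) by (apply (En_nonneg _ _ _ _ Q); auto).
    destruct Hne as [Hne|Hne].
    - assert (0 < Eu) by (apply (En_pos _ _ _ _ P x1); auto). lra.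
    - assert (0 < Ev) by (apply (En_pos _ _ _ _ Q x1); auto). lra. }
  assert (Hb : b = 0).
  { assert (b * (Eu + Ev) = 0) by nra.
    apply Rmult_integral in H. destruct H; auto. lra. }
  subst b. split; auto.
  assert (HPP := Ip_nonneg x0 P ltac:(lra) CP). assert (HQQ := Ip_nonneg x0 Q ltac:(lra) CQ).
  destruct (Rtotal_order a 0) as [|[Ha|Ha]]; auto; exfalso.
  - subst a. assert (Ip x0 P P = 0) by nra. assert (Ip x0 Q Q = 0) by nra.
    assert (ZP := Ip_zero x0 P ltac:(lra) CP H). assert (ZQ := Ip_zero x0 Q ltac:(lra) CQ H1).
    assert (Ip x0 P u = 0).
    { unfold Ip. rewrite (RI_ext _ (fun _ => 0)). rewrite RI_const; ring.
      intros x Hx. rewrite Rmin_left, Rmax_right in Hx by lra. unfold ex. rewrite cl_id by (unfold Iv; lra).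
      rewrite ZP by (unfold Iv; lra). ring. }
    assert (Ip x0 Q v = 0).
    { unfold Ip. rewrite (RI_ext _ (fun _ => 0)). rewrite RI_const; ring.
      intros x Hx. rewrite Rmin_left, Rmax_right in Hx by lra. unfold ex. rewrite cl_id by (unfold Iv; lra).
      rewrite ZQ by (unfold Iv; lra). ring. }
    lra.
  - assert (a * (Eu + Ev) > 0) by (apply Rmult_gt_0_compat; lra). nra.
Qed.


Lemma sm_cont n (h : nat -> R -> R) x : (forall j, (j < n)%nat -> continuity_pt (h j) x) ->
  continuity_pt (fun x => sm n (fun j => h j x)) x.
Proof.
  induction n; intros H; simpl. apply cpc.
  apply continuity_pt_plus. apply IHn; intros; apply H; lia. apply H; lia.
Qed.

Lemma RInt_sm n (h : nat -> R -> R) a b : (forall j, (j < n)%nat -> forall x, continuity_pt (h j) x) ->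
  RInt (fun x => sm n (fun j => h j x)) a b = sm n (fun j => RInt (h j) a b).
Proof.
  induction n; intros H; simpl. rewrite RI_const; ring.
  rewrite RI_plus; [rewrite IHn; [reflexivity| intros; apply H; lia] | |].
  apply ex_RInt_c. intros; apply sm_cont; intros; apply H; lia.
  apply ex_RInt_c. intros; apply H; lia.
Qed.

Lemma sm_mult_r n f c : sm n f * c = sm n (fun j => f j * c).
Proof. induction n; simpl. ring. rewrite <- IHn. ring. Qed.

Lemma sm_const0 n : sm n (fun _ => 0) = 0.
Proof. induction n; simpl; auto. rewrite IHn. ring. Qed.

Lemma sm_single n f j : (j < n)%nat -> (forall l, (l < n)%nat -> l <> j -> f l = 0) -> sm n f = f j.
Proof.
  induction n; intros Hj H. lia. simpl.
  destruct (Nat.eq_dec j n) as [->|Hne].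
  - rewrite (sm_ext n f (fun _ => 0)). rewrite sm_const0. ring.
    intros; apply H; lia.
  - rewrite IHn; try lia. rewrite (H n); try lia. ring. intros; apply H; lia.
Qed.

Lemma sm_zero n f : (forall j, (j < n)%nat -> f j = 0) -> sm n f = 0.
Proof. induction n; simpl; intros; auto. rewrite IHn, H; try lia. ring. intros; apply H; lia. Qed.

Lemma sm_ge n f c : (forall j, (j < n)%nat -> c <= f j) -> INR n * c <= sm n f.
Proof.
  induction n; intros H. simpl; lra.
  rewrite S_INR. simpl sm. assert (INR n * c <= sm n f) by (apply IHn; intros; apply H; lia).
  assert (c <= f n) by (apply H; lia). lra.
Qed.

Lemma sm_nonneg n f : (forall j, (j < n)%nat -> 0 <= f j) -> 0 <= sm n f.
Proof. intros. pose proof (sm_ge n f 0 H). lra. Qed.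

Lemma Ip_sum_l x0 n (al : nat -> R) (P : nat -> R -> R) g :
  (forall j, (j < n)%nat -> forall x, continuity_pt (ex x0 (P j)) x) -> (forall x, continuity_pt (ex x0 g) x) ->
  Ip x0 (fun x => sm n (fun j => al j * P j x)) g = sm n (fun j => al j * Ip x0 (P j) g).
Proof.
  intros HP Hg. unfold Ip.
  rewrite (RI_ext _ (fun x => sm n (fun j => al j * (ex x0 (P j) x * ex x0 g x)))).
  2:{ intros. unfold ex. rewrite sm_mult_r. apply sm_ext. intros; ring. }
  rewrite RInt_sm. apply sm_ext. intros. apply RI_scal. apply ex_RInt_c.
  intros; apply continuity_pt_mult; auto.
  intros; apply continuity_pt_scal; apply continuity_pt_mult; auto.
Qed.

Lemma Ip_sum_r x0 n (al : nat -> R) (P : nat -> R -> R) g :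
  (forall j, (j < n)%nat -> forall x, continuity_pt (ex x0 (P j)) x) -> (forall x, continuity_pt (ex x0 g) x) ->
  Ip x0 g (fun x => sm n (fun j => al j * P j x)) = sm n (fun j => al j * Ip x0 g (P j)).
Proof.
  intros. rewrite Ip_comm, Ip_sum_l; auto. apply sm_ext; intros. rewrite Ip_comm; auto.
Qed.

Definition EigR x0 kk a (u u' P P' : R -> R) :=
  Reg x0 kk u u' P /\ Reg x0 kk P P' (fun x => a * P x) /\
  u x0 = 0 /\ u (-x0) = 0 /\ u' x0 = 0 /\ u' (-x0) = 0.

Lemma Ip_scal x0 a (f g : R -> R) : (forall x, continuity_pt (ex x0 f) x) -> (forall x, continuity_pt (ex x0 g) x) ->
  Ip x0 (fun x => a * f x) g = a * Ip x0 f g.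
Proof.
  intros. transitivity (Ip x0 (fun x => a * f x + 0 * f x) g).
  unfold Ip; apply RI_ext; intros; unfold ex; ring.
  rewrite (Ip_lin x0 f f g a 0); auto. ring.
Qed.

Lemma eig_self x0 kk a u u' P P' : 0 < x0 < 1 -> EigR x0 kk a u u' P P' ->
  Ip x0 P u = - Bf x0 kk u u' u u' /\ Ip x0 P P = - a * Bf x0 kk u u' u u'.
Proof.
  intros H0 [Ru [RP [h1 [h2 [h3 h4]]]]].
  assert (E1 : Ip x0 P u = - Bf x0 kk u u' u u') by (eapply green0; eauto).
  split; auto.
  rewrite (green0' x0 kk u u' P P P' (fun x => a * P x)); auto.
  rewrite Bf_sym, <- (green0 x0 kk P P' (fun x => a * P x) u u' P); auto.
  rewrite Ip_scal, E1. ring.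
  intros; apply (Reg_cont _ _ _ _ _ _ RP). intros; apply (Reg_cont _ _ _ _ _ _ Ru).
Qed.

Lemma eig_orth x0 kk a1 u1 u1' P1 P1' a2 u2 u2' P2 P2' : 0 < x0 < 1 ->
  EigR x0 kk a1 u1 u1' P1 P1' -> EigR x0 kk a2 u2 u2' P2 P2' -> a1 <> a2 -> Ip x0 P1 u2 = 0.
Proof.
  intros H0 E1 E2 Hne.
  destruct E1 as [Ru1 [RP1 [h1 [h2 [h3 h4]]]]]. destruct E2 as [Ru2 [RP2 [k1 [k2 [k3 k4]]]]].
  assert (C1 := fun x => Reg_cont _ _ _ _ _ x RP1). assert (C2 := fun x => Reg_cont _ _ _ _ _ x RP2).
  assert (D1 := fun x => Reg_cont _ _ _ _ _ x Ru1). assert (D2 := fun x => Reg_cont _ _ _ _ _ x Ru2).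
  assert (X1 : a1 * Ip x0 P1 u2 = Ip x0 P2 P1).
  { rewrite <- Ip_scal by auto.
    rewrite (green0 x0 kk P1 P1' (fun x => a1 * P1 x) u2 u2' P2); auto.
    rewrite (green0' x0 kk u2 u2' P2 P1 P1' (fun x => a1 * P1 x)); auto. rewrite Bf_sym; auto. }
  assert (X2 : a2 * Ip x0 P2 u1 = Ip x0 P1 P2).
  { rewrite <- Ip_scal by auto.
    rewrite (green0 x0 kk P2 P2' (fun x => a2 * P2 x) u1 u1' P1); auto.
    rewrite (green0' x0 kk u1 u1' P1 P2 P2' (fun x => a2 * P2 x)); auto. rewrite Bf_sym; auto. }
  assert (X3 : Ip x0 P1 u2 = Ip x0 P2 u1).
  { rewrite (green0 x0 kk u1 u1' P1 u2 u2' P2); auto. rewrite (green0 x0 kk u2 u2' P2 u1 u1' P1); auto.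
    rewrite Bf_sym; auto. }
  rewrite (Ip_comm x0 P1 P2) in X2. rewrite <- X3 in X2.
  assert ((a1 - a2) * Ip x0 P1 u2 = 0) by lra.
  apply Rmult_integral in H. destruct H; auto. lra.
Qed.

Lemma eig_lower x0 kk a u u' P P' R : 0 < x0 < 1 -> 0 <= kk -> 0 < R -> - a <= R -> EigR x0 kk a u u' P P' ->
  Bf x0 kk u u' u u' <= R * Ip x0 u u.
Proof.
  intros H0 Hk HR Ha E. destruct (eig_self _ _ _ _ _ _ _ H0 E) as [S1 S2].
  destruct E as [Ru [RP _]].
  assert (C1 := fun x => Reg_cont _ _ _ _ _ x RP). assert (D1 := fun x => Reg_cont _ _ _ _ _ x Ru).
  assert (En := En_nonneg _ _ _ _ _ H0 Hk Ru).
  set (w := fun x => 1 * P x + R * u x).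
  assert (Cw : forall x, continuity_pt (ex x0 w) x) by (intros; unfold w, ex; apply continuity_pt_plus; apply continuity_pt_scal; auto).
  assert (N := Ip_nonneg x0 w ltac:(lra) Cw).
  unfold w at 1 in N. rewrite Ip_lin in N; auto.
  rewrite (Ip_comm x0 P w), (Ip_comm x0 u w) in N. unfold w in N. rewrite !Ip_lin in N; auto.
  rewrite (Ip_comm x0 u P) in N. rewrite S1, S2 in N.
  set (E0 := Bf x0 kk u u' u u') in *.
  assert (R * E0 + - a * E0 <= 2 * R * E0) by nra.
  assert (R * E0 <= R * (R * Ip x0 u u)) by nra.
  apply Rmult_le_reg_l with R; auto.
Qed.

Lemma pt_bound x0 kk f f' F s : 0 < x0 < 1 -> 0 <= kk -> Reg x0 kk f f' F -> f (-x0) = 0 -> Iv x0 s ->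
  (ex x0 f s) ^ 2 <= (2 * x0 / (1 - x0 ^ 2)) * Bf x0 kk f f' f f'.
Proof.
  intros H0 Hk Rf Hf Hs.
  assert (Cd := fun x => Reg_d_cont _ _ _ _ _ x H0 Rf).
  assert (Cf := fun x => Reg_cont _ _ _ _ _ x Rf).
  pose proof Rf as Rf0. destruct Rf as [_ [_ [_ [Df _]]]].
  unfold Iv in Hs.
  assert (Hft : RInt (ex x0 f') (-x0) s = ex x0 f s - ex x0 f (-x0)).
  { apply ftc; auto. lra. intros x Hx. apply ex_derive_int' with (f' x). lra.
    rewrite ex_int; auto; lra. apply Df; lra. }
  unfold ex at 3 in Hft. rewrite cl_id in Hft by (unfold Iv; lra). rewrite Hf in Hft.
  assert (HCS := CS (ex x0 f') (-x0) s ltac:(lra) Cd).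
  rewrite Hft in HCS. replace (ex x0 f s - 0) with (ex x0 f s) in HCS by ring.
  assert (Hsq : forall x, continuity_pt (fun x => ex x0 f' x ^ 2) x) by (intros; apply sq_cont; auto).
  assert (Hi1 : RInt (fun x => ex x0 f' x ^ 2) (-x0) s <= RInt (fun x => ex x0 f' x ^ 2) (-x0) x0).
  { rewrite <- (RI_Chasles _ (-x0) s x0) by (apply ex_RInt_c; auto).
    assert (0 <= RInt (fun x => ex x0 f' x ^ 2) s x0).
    { apply RInt_ge_0. lra. apply ex_RInt_c; auto. intros; apply pow2_ge_0. }
    lra. }
  assert (Hi0 : 0 <= RInt (fun x => ex x0 f' x ^ 2) (-x0) s).
  { apply RInt_ge_0. lra. apply ex_RInt_c; auto. intros; apply pow2_ge_0. }
  assert (Hx0 : 0 < 1 - x0 ^ 2) by nra.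
  assert (Hi2 : (1 - x0 ^ 2) * RInt (fun x => ex x0 f' x ^ 2) (-x0) x0 <= Bf x0 kk f f' f f').
  { rewrite <- RI_scal by (apply ex_RInt_c; auto). unfold Bf. apply RInt_le. lra.
    apply ex_RInt_c; intros; apply continuity_pt_scal; auto.
    apply ex_RInt_c. intros. apply (Bf_cont _ _ _ _ F); auto.
    intros x _. destruct (pp_pos x0 x H0). destruct (cf_bound x0 kk x H0 Hk).
    unfold ex in *. assert (0 <= f (cl x0 x) * f (cl x0 x)) by apply Rle_0_sqr.
    assert (0 <= cf kk (cl x0 x) * (f (cl x0 x) * f (cl x0 x))) by (apply Rmult_le_pos; auto).
    assert (0 <= f' (cl x0 x) ^ 2) by apply pow2_ge_0.
    assert ((1 - x0 ^ 2) * f' (cl x0 x) ^ 2 <= pp (cl x0 x) * f' (cl x0 x) ^ 2) by (apply Rmult_le_compat_r; lra).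
    nra. }
  set (I1 := RInt (fun x => ex x0 f' x ^ 2) (-x0) s) in *.
  set (I2 := RInt (fun x => ex x0 f' x ^ 2) (-x0) x0) in *.
  assert (ex x0 f s ^ 2 <= 2 * x0 * I2) by nra.
  assert (I2 <= Bf x0 kk f f' f f' / (1 - x0 ^ 2)).
  { apply Rmult_le_reg_l with (1 - x0 ^ 2); auto. field_simplify; lra. }
  unfold Rdiv in *. nra.
Qed.


Lemma alg_le S C : 0 < C -> 0 <= S -> S ^ 2 <= C * S -> S <= C.
Proof.
  intros HC HS H. destruct (Rle_lt_dec S C); auto.
  assert (C * S < S * S) by (apply Rmult_lt_compat_r; lra). simpl in H. lra.
Qed.

Lemma count_bound x0 kk Rb n (a : nat -> R) (u u' P P' : nat -> R -> R) : 0 < x0 < 1 -> 0 < kk -> 0 < Rb ->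
  (forall j, (j < n)%nat -> EigR x0 kk (a j) (u j) (u' j) (P j) (P' j) /\ - a j <= Rb /\
      exists x1, Iv x0 x1 /\ u j x1 <> 0) ->
  (forall i j, (i < n)%nat -> (j < n)%nat -> i <> j -> a i <> a j) ->
  INR n <= 2 * x0 * (2 * x0 / (1 - x0 ^ 2)) * Rb.
Proof.
  intros H0 Hk HR Hj Hd.
  assert (Hk' : 0 <= kk) by lra.
  assert (Hx0 : 0 < 1 - x0 ^ 2) by nra.
  set (C0 := 2 * x0 / (1 - x0 ^ 2)).
  assert (HC0 : 0 < C0) by (unfold C0; apply Rdiv_lt_0_compat; lra).
  set (E := fun j => Bf x0 kk (u j) (u' j) (u j) (u' j)).
  assert (Epos : forall j, (j < n)%nat -> 0 < E j).
  { intros j Hjn. destruct (Hj j Hjn) as [[Ru _] [_ [x1 [Hx1 Hne]]]]. apply (En_pos x0 kk (u j) (u' j) (P j) x1); auto. }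
  assert (Cu : forall j, (j < n)%nat -> forall x, continuity_pt (ex x0 (u j)) x).
  { intros j Hjn x. destruct (Hj j Hjn) as [[Ru _] _]. apply (Reg_cont x0 kk (u j) (u' j) (P j)); auto. }
  assert (CP : forall j, (j < n)%nat -> forall x, continuity_pt (ex x0 (P j)) x).
  { intros j Hjn x. destruct (Hj j Hjn) as [[_ [RP _]] _]. apply (Reg_cont x0 kk (P j) (P' j) (fun x => a j * P j x)); auto. }
  set (Sf := fun s => sm n (fun j => / E j * (ex x0 (u j) s * ex x0 (u j) s))).
  assert (HS : forall s, Iv x0 s -> Sf s <= C0).
  { intros s Hs.
    set (al := fun j => ex x0 (u j) s / E j).
    assert (Rpsi : Reg x0 kk (fun x => sm n (fun j => al j * u j x)) (fun x => sm n (fun j => al j * u' j x))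
                     (fun x => sm n (fun j => al j * P j x))).
    { apply Reg_sum. lra. intros j Hjn. destruct (Hj j Hjn) as [[Ru _] _]. auto. }
    set (psi := fun x => sm n (fun j => al j * u j x)) in *.
    set (psi' := fun x => sm n (fun j => al j * u' j x)) in *.
    set (Psi := fun x => sm n (fun j => al j * P j x)) in *.
    assert (Hp1 : psi x0 = 0).
    { unfold psi. apply sm_zero. intros j Hjn. destruct (Hj j Hjn) as [[_ [_ [h1 _]]] _]. rewrite h1; ring. }
    assert (Hp2 : psi (-x0) = 0).
    { unfold psi. apply sm_zero. intros j Hjn. destruct (Hj j Hjn) as [[_ [_ [_ [h1 _]]]] _]. rewrite h1; ring. }
    assert (Cpsi : forall x, continuity_pt (ex x0 psi) x) by (intros; apply (Reg_cont x0 kk psi psi' Psi); auto).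
    assert (B1 := pt_bound x0 kk psi psi' Psi s H0 Hk' Rpsi Hp2 Hs).
    assert (B2 : Bf x0 kk psi psi' psi psi' = Sf s).
    { rewrite <- (Ropp_involutive (Bf _ _ _ _ _ _)).
      rewrite <- (green0 x0 kk psi psi' Psi psi psi' Psi); auto.
      unfold Psi at 1. rewrite Ip_sum_l; auto.
      unfold Sf.
      assert (forall m f, - sm m f = sm m (fun j => - f j)) as Hneg.
      { induction m; intros; simpl. ring. rewrite <- IHm. ring. }
      rewrite Hneg. apply sm_ext. intros j Hjn.
      unfold psi. rewrite Ip_sum_r; auto.
      rewrite (sm_single n _ j); auto.
      2:{ intros l Hl Hlj. rewrite (eig_orth x0 kk (a j) (u j) (u' j) (P j) (P' j) (a l) (u l) (u' l) (P l) (P' l)).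
          ring. auto. apply Hj; auto. apply Hj; auto. apply Hd; auto. }
      destruct (eig_self x0 kk (a j) (u j) (u' j) (P j) (P' j) H0 (proj1 (Hj j Hjn))) as [S1 _].
      rewrite S1. fold (E j). unfold al. assert (E j > 0) by (apply Epos; auto). field. lra. }
    assert (B3 : ex x0 psi s = Sf s).
    { unfold psi, Sf, ex. apply sm_ext. intros j Hjn. unfold al, ex.
      assert (E j > 0) by (apply Epos; auto). field. lra. }
    rewrite B2, B3 in B1. fold C0 in B1.
    assert (0 <= Sf s).
    { unfold Sf. apply sm_nonneg. intros j Hjn. apply Rmult_le_pos.
      left; apply Rinv_0_lt_compat; apply Epos; auto. apply Rle_0_sqr. }
    apply alg_le; auto. }
  assert (CSf : forall x, continuity_pt Sf x).
  { intros x. unfold Sf. apply sm_cont. intros j Hjn. apply continuity_pt_scal. apply continuity_pt_mult; auto. }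
  assert (I1 : RInt Sf (-x0) x0 <= C0 * (x0 - - x0)).
  { rewrite <- RI_const. apply RInt_le. lra. apply ex_RInt_c; auto. apply ex_RInt_c; intros; apply cpc.
    intros x Hx. apply HS. unfold Iv; lra. }
  assert (I2 : RInt Sf (-x0) x0 = sm n (fun j => / E j * Ip x0 (u j) (u j))).
  { unfold Sf. rewrite RInt_sm. apply sm_ext. intros j Hjn. unfold Ip. apply RI_scal.
    apply ex_RInt_c. intros; apply continuity_pt_mult; auto.
    intros j Hjn x. apply continuity_pt_scal. apply continuity_pt_mult; auto. }
  assert (I3 : INR n * / Rb <= sm n (fun j => / E j * Ip x0 (u j) (u j))).
  { apply sm_ge. intros j Hjn.
    destruct (Hj j Hjn) as [Ej [Ha _]].
    assert (L := eig_lower x0 kk (a j) (u j) (u' j) (P j) (P' j) Rb H0 Hk' HR Ha Ej).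
    fold (E j) in L. assert (HE := Epos j Hjn).
    apply Rmult_le_reg_l with (E j * Rb). apply Rmult_lt_0_compat; lra.
    replace (E j * Rb * / Rb) with (E j) by (field; lra).
    replace (E j * Rb * (/ E j * Ip x0 (u j) (u j))) with (Rb * Ip x0 (u j) (u j)) by (field; lra). lra. }
  assert (INR n * / Rb <= C0 * (2 * x0)) by lra.
  apply Rmult_le_reg_r with (/ Rb). apply Rinv_0_lt_compat; auto.
  replace (2 * x0 * C0 * Rb * / Rb) with (C0 * (2 * x0)) by (field; lra). lra.
Qed.


Lemma Re_mult (a b : C) : Re (a * b)%C = Re a * Re b - Im a * Im b.
Proof. destruct a, b. simpl. ring. Qed.
Lemma Im_mult (a b : C) : Im (a * b)%C = Re a * Im b + Im a * Re b.
Proof. destruct a, b. simpl. ring. Qed.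
Lemma Re_plus (a b : C) : Re (a + b)%C = Re a + Re b.
Proof. destruct a, b. simpl. ring. Qed.
Lemma Im_plus (a b : C) : Im (a + b)%C = Im a + Im b.
Proof. destruct a, b. simpl. ring. Qed.
Lemma Re_minus (a b : C) : Re (a - b)%C = Re a - Re b.
Proof. destruct a, b. simpl. ring. Qed.
Lemma Im_minus (a b : C) : Im (a - b)%C = Im a - Im b.
Proof. destruct a, b. simpl. ring. Qed.
Lemma Re_RtoC (r : R) (b : C) : Re (RtoC r * b)%C = r * Re b.
Proof. destruct b. simpl. ring. Qed.
Lemma Im_RtoC (r : R) (b : C) : Im (RtoC r * b)%C = r * Im b.
Proof. destruct b. simpl. ring. Qed.
Lemma C_eq0 (z : C) : Re z = 0 -> Im z = 0 -> z = 0%C.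
Proof. destruct z; simpl; intros; subst; reflexivity. Qed.

Lemma mkReg x0 kk u u' W F : 0 < x0 < 1 -> DW x0 u u' -> DW x0 (fun x => pp x * u' x) W ->
  (forall x, Iv x0 x -> F x = W x - cf kk x * u x) -> (forall x, continuity_pt (ex x0 F) x) ->
  Reg x0 kk u u' F.
Proof.
  intros H0 D1 D2 EF CF. split; [|split; [|split; [|split]]].
  - apply CW_cont. lra. eapply DW_CW; exact D1.
  - apply CW_cont. lra. eapply DW_CW; exact D2.
  - auto.
  - intros x Hx. apply (DW_derive x0); auto.
  - intros x Hx. apply is_derive_val with (W x). rewrite EF by (unfold Iv; lra). ring.
    apply (DW_derive x0); auto.
Qed.

Definition kkz (k : Z) := IZR k ^ 2.

Lemma cf_eq k x : IZR k ^ 2 / (1 - x ^ 2) = cf (kkz k) x.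
Proof. reflexivity. Qed.

Lemma split_eig k x0 mu Psi : 0 < x0 < 1 -> in_eigenspace k x0 mu Psi ->
  exists Psi' Phi Phi' : R -> C,
    Reg x0 (kkz k) (fun x => Re (Psi x)) (fun x => Re (Psi' x)) (fun x => Re (Phi x)) /\
    Reg x0 (kkz k) (fun x => Im (Psi x)) (fun x => Im (Psi' x)) (fun x => Im (Phi x)) /\
    Reg x0 (kkz k) (fun x => Re (Phi x)) (fun x => Re (Phi' x)) (fun x => Re mu * Re (Phi x) - Im mu * Im (Phi x)) /\
    Reg x0 (kkz k) (fun x => Im (Phi x)) (fun x => Im (Phi' x)) (fun x => Im mu * Re (Phi x) + Re mu * Im (Phi x)) /\
    Psi x0 = 0%C /\ Psi (-x0) = 0%C /\ Psi' x0 = 0%C /\ Psi' (-x0) = 0%C.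
Proof.
  intros H0 [Psi' [Phi [DPsi [_ [h1 [h2 [h3 [h4 [L1 L2]]]]]]]]].
  destruct L1 as [F' [W [DF [DW1 EW]]]]. destruct L2 as [G' [W2 [DG [DW2 EW2]]]].
  exists Psi', Phi, G'.
  destruct (deriv_on_DW _ _ _ DPsi) as [DRe DIm].
  destruct (deriv_on_DW _ _ _ DF) as [DFRe DFIm].
  destruct (deriv_on_DW _ _ _ DW1) as [DWRe DWIm].
  destruct (deriv_on_DW _ _ _ DG) as [DGRe DGIm].
  destruct (deriv_on_DW _ _ _ DW2) as [DW2Re DW2Im].
  assert (UR : forall x, Iv x0 x -> Re (F' x) = Re (Psi' x)) by (intros x Hx; apply (DW_unique x0 (fun x => Re (Psi x)) (fun x => Re (F' x)) (fun x => Re (Psi' x)) x); auto; lra).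
  assert (UI : forall x, Iv x0 x -> Im (F' x) = Im (Psi' x)) by (intros x Hx; apply (DW_unique x0 (fun x => Im (Psi x)) (fun x => Im (F' x)) (fun x => Im (Psi' x)) x); auto; lra).
  assert (CRe : forall x, continuity_pt (ex x0 (fun x => Re (Phi x))) x) by (apply CW_cont; [lra|]; eapply DW_CW; exact DGRe).
  assert (CIm : forall x, continuity_pt (ex x0 (fun x => Im (Phi x))) x) by (apply CW_cont; [lra|]; eapply DW_CW; exact DGIm).
  split; [|split; [|split; [|split]]].
  - apply mkReg with (fun x => Re (W x)); auto.
    + eapply DW_ext; [| |exact DWRe]; intros; cbv beta; auto. rewrite Re_RtoC. rewrite UR; auto.
    + intros x Hx. rewrite EW by auto. rewrite Re_minus, Re_RtoC. reflexivity.
  - apply mkReg with (fun x => Im (W x)); auto.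
    + eapply DW_ext; [| |exact DWIm]; intros; cbv beta; auto. rewrite Im_RtoC. rewrite UI; auto.
    + intros x Hx. rewrite EW by auto. rewrite Im_minus, Im_RtoC. reflexivity.
  - apply mkReg with (fun x => Re (W2 x)); auto.
    + eapply DW_ext; [| |exact DW2Re]; intros; cbv beta; auto. rewrite Re_RtoC. auto.
    + intros x Hx. assert (E := f_equal Re (EW2 x Hx)). rewrite Re_minus, Re_RtoC, Re_mult in E.
      unfold cf, kkz. lra.
    + intros x. unfold ex. apply continuity_pt_minus; apply continuity_pt_scal; auto.
  - apply mkReg with (fun x => Im (W2 x)); auto.
    + eapply DW_ext; [| |exact DW2Im]; intros; cbv beta; auto. rewrite Im_RtoC. auto.
    + intros x Hx. assert (E := f_equal Im (EW2 x Hx)). rewrite Im_minus, Im_RtoC, Im_mult in E.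
      unfold cf, kkz. lra.
    + intros x. unfold ex. apply continuity_pt_plus; apply continuity_pt_scal; auto.
  - auto.
Qed.

Lemma kkz_pos k : k <> 0%Z -> 0 < kkz k.
Proof. intros H. unfold kkz. apply pow2_gt_0. apply not_0_IZR. auto. Qed.

Lemma eig_real k x0 nu : k <> 0%Z -> 0 < x0 < 1 -> is_eigenvalue k x0 nu -> Im nu = 0 /\ Re nu < 0.
Proof.
  intros Hk H0 [Psi [HE [x1 [Hx1 Hne]]]].
  destruct (split_eig k x0 nu Psi H0 HE) as [Psi' [Phi [Phi' [R1 [R2 [R3 [R4 [h1 [h2 [h3 h4]]]]]]]]]].
  assert (R3' : Reg x0 (kkz k) (fun x => Re (Phi x)) (fun x => Re (Phi' x))
                   (fun x => Re nu * Re (Phi x) - Im nu * Im (Phi x))) by exact R3.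
  destruct (real_neg x0 (kkz k) (Re nu) (Im nu) _ _ _ _ _ _ _ _ H0 (kkz_pos k Hk) R1 R2 R3 R4) as [Hb Ha];
    try (rewrite ?h1, ?h2, ?h3, ?h4; reflexivity).
  - exists x1. split; auto. destruct (Req_dec (Re (Psi x1)) 0); [right|left; auto].
    intro. apply Hne. apply C_eq0; auto.
  - auto.
Qed.

Lemma eig_data k x0 nu : k <> 0%Z -> 0 < x0 < 1 -> is_eigenvalue k x0 nu ->
  exists u u' P P' : R -> R, EigR x0 (kkz k) (Re nu) u u' P P' /\ exists x1, Iv x0 x1 /\ u x1 <> 0.
Proof.
  intros Hk H0 Hev. destruct (eig_real k x0 nu Hk H0 Hev) as [Hb _].
  destruct Hev as [Psi [HE [x1 [Hx1 Hne]]]].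
  destruct (split_eig k x0 nu Psi H0 HE) as [Psi' [Phi [Phi' [R1 [R2 [R3 [R4 [h1 [h2 [h3 h4]]]]]]]]]].
  rewrite Hb in R3, R4.
  destruct (Req_dec (Re (Psi x1)) 0) as [HR|HR].
  - exists (fun x => Im (Psi x)), (fun x => Im (Psi' x)), (fun x => Im (Phi x)), (fun x => Im (Phi' x)).
    split. split; [auto|split; [|rewrite ?h1, ?h2, ?h3, ?h4; simpl; repeat split; reflexivity]].
    eapply Reg_ext; [lra| | | | exact R4]; intros; simpl; auto; ring.
    exists x1. split; auto. intro. apply Hne. apply C_eq0; auto.
  - exists (fun x => Re (Psi x)), (fun x => Re (Psi' x)), (fun x => Re (Phi x)), (fun x => Re (Phi' x)).
    split. split; [auto|split; [|rewrite ?h1, ?h2, ?h3, ?h4; simpl; repeat split; reflexivity]].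
    eapply Reg_ext; [lra| | | | exact R3]; intros; simpl; auto; ring.
    exists x1. split; auto.
Qed.


Definition Sys2 x0 kk a (u u' P P' : R -> R) := Reg x0 kk u u' P /\ Reg x0 kk P P' (fun x => a * P x).
Definition CSys x0 kk a (Ps Ps' Ph Ph' : R -> C) := forall c : C,
  Sys2 x0 kk a (fun x => Re (c * Ps x)) (fun x => Re (c * Ps' x)) (fun x => Re (c * Ph x)) (fun x => Re (c * Ph' x)).

Lemma Re_cmul (c z : C) : Re (c * z)%C = Re c * Re z + - Im c * Im z.
Proof. rewrite Re_mult. ring. Qed.

Lemma CSys_base x0 kk a (Ps Ps' Ph Ph' : R -> C) : 0 <= x0 ->
  Reg x0 kk (fun x => Re (Ps x)) (fun x => Re (Ps' x)) (fun x => Re (Ph x)) ->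
  Reg x0 kk (fun x => Im (Ps x)) (fun x => Im (Ps' x)) (fun x => Im (Ph x)) ->
  Reg x0 kk (fun x => Re (Ph x)) (fun x => Re (Ph' x)) (fun x => a * Re (Ph x) - 0 * Im (Ph x)) ->
  Reg x0 kk (fun x => Im (Ph x)) (fun x => Im (Ph' x)) (fun x => 0 * Re (Ph x) + a * Im (Ph x)) ->
  CSys x0 kk a Ps Ps' Ph Ph'.
Proof.
  intros H0 R1 R2 R3 R4 c. split.
  - eapply Reg_ext; [auto| | | | exact (Reg_lin _ _ _ _ _ _ _ _ (Re c) (- Im c) R1 R2)];
      intros; cbv beta; rewrite Re_cmul; ring.
  - eapply Reg_ext; [auto| | | | exact (Reg_lin _ _ _ _ _ _ _ _ (Re c) (- Im c) R3 R4)];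
      intros; cbv beta; rewrite ?Re_cmul; ring.
Qed.

Lemma Re_cdist (c z1 z2 : C) : Re (c * (z1 + z2))%C = 1 * Re (c * z1)%C + 1 * Re (c * z2)%C.
Proof. rewrite !Re_mult, Re_plus, Im_plus. ring. Qed.

Lemma CSys_add x0 kk a Ps1 Ps1' Ph1 Ph1' Ps2 Ps2' Ph2 Ph2' : 0 <= x0 ->
  CSys x0 kk a Ps1 Ps1' Ph1 Ph1' -> CSys x0 kk a Ps2 Ps2' Ph2 Ph2' ->
  CSys x0 kk a (fun x => Ps1 x + Ps2 x)%C (fun x => Ps1' x + Ps2' x)%C (fun x => Ph1 x + Ph2 x)%C (fun x => Ph1' x + Ph2' x)%C.
Proof.
  intros H0 S1 S2 c. destruct (S1 c) as [A1 B1]. destruct (S2 c) as [A2 B2]. split.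
  - eapply Reg_ext; [auto| | | | exact (Reg_lin _ _ _ _ _ _ _ _ 1 1 A1 A2)]; intros; cbv beta; rewrite Re_cdist; ring.
  - eapply Reg_ext; [auto| | | | exact (Reg_lin _ _ _ _ _ _ _ _ 1 1 B1 B2)]; intros; cbv beta; rewrite ?Re_cdist; ring.
Qed.

Lemma CSys_scal x0 kk a d Ps Ps' Ph Ph' : 0 <= x0 -> CSys x0 kk a Ps Ps' Ph Ph' ->
  CSys x0 kk a (fun x => d * Ps x)%C (fun x => d * Ps' x)%C (fun x => d * Ph x)%C (fun x => d * Ph' x)%C.
Proof.
  intros H0 S c. destruct (S (c * d)%C) as [A B]. split.
  - eapply Reg_ext; [auto| | | | exact A]; intros; cbv beta; rewrite Cmult_assoc; auto.
  - eapply Reg_ext; [auto| | | | exact B]; intros; cbv beta; rewrite ?Cmult_assoc; auto.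
Qed.

Lemma Cneg_ne (a : C) : a <> 0%C -> (- a)%C <> 0%C.
Proof. intros H E. apply H. replace a with (- - a)%C by ring. rewrite E. ring. Qed.

Lemma lin23 (a1 a2 a3 b1 b2 b3 : C) : exists c1 c2 c3 : C,
  (c1 <> 0%C \/ c2 <> 0%C \/ c3 <> 0%C) /\ (c1 * a1 + c2 * a2 + c3 * a3 = 0)%C /\ (c1 * b1 + c2 * b2 + c3 * b3 = 0)%C.
Proof.
  destruct (classic ((a2 * b3 - a3 * b2)%C <> 0%C \/ (a3 * b1 - a1 * b3)%C <> 0%C \/ (a1 * b2 - a2 * b1)%C <> 0%C)) as [Hd|Hd].
  - exists (a2 * b3 - a3 * b2)%C, (a3 * b1 - a1 * b3)%C, (a1 * b2 - a2 * b1)%C. split; auto. split; ring.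
  - assert (d1 : (a2 * b3 - a3 * b2)%C = 0%C) by (apply NNPP; intro; apply Hd; auto).
    assert (d2 : (a3 * b1 - a1 * b3)%C = 0%C) by (apply NNPP; intro; apply Hd; auto).
    assert (d3 : (a1 * b2 - a2 * b1)%C = 0%C) by (apply NNPP; intro; apply Hd; auto).
    destruct (classic (a1 <> 0%C \/ a2 <> 0%C)) as [Ha|Ha].
    + exists a2, (- a1)%C, 0%C. split.
      { destruct Ha; [right; left; apply Cneg_ne|left]; auto. }
      split. ring. replace (a2 * b1 + - a1 * b2 + 0 * b3)%C with (- (a1 * b2 - a2 * b1))%C by ring. rewrite d3. ring.
    + assert (e1 : a1 = 0%C) by (apply NNPP; intro; apply Ha; auto).
      assert (e2 : a2 = 0%C) by (apply NNPP; intro; apply Ha; auto).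
      destruct (classic (a3 = 0%C)) as [e3|e3].
      * subst. destruct (classic (b1 <> 0%C \/ b2 <> 0%C)) as [Hb|Hb].
        -- exists b2, (- b1)%C, 0%C. split.
           { destruct Hb; [right; left; apply Cneg_ne|left]; auto. }
           split; ring.
        -- assert (f1 : b1 = 0%C) by (apply NNPP; intro; apply Hb; auto).
           exists 1%C, 0%C, 0%C. split. left. intro E. injection E. lra.
           subst. split; ring.
      * exists a3, 0%C, (- a1)%C. split. left; auto. split. ring.
        replace (a3 * b1 + 0 * b2 + - a1 * b3)%C with (a3 * b1 - a1 * b3)%C by ring. auto.
Qed.

Lemma Re_mi (z : C) : Re ((0, -1) * z)%C = Im z.
Proof. destruct z. simpl. ring. Qed.
Lemma Re_one (z : C) : Re (1 * z)%C = Re z.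
Proof. destruct z. simpl. ring. Qed.

Lemma dim2 k x0 mu (Ps1 Ps2 Ps3 : R -> C) : k <> 0%Z -> 0 < x0 < 1 -> Im mu = 0 ->
  in_eigenspace k x0 mu Ps1 -> in_eigenspace k x0 mu Ps2 -> in_eigenspace k x0 mu Ps3 ->
  exists c1 c2 c3 : C, (c1 <> 0%C \/ c2 <> 0%C \/ c3 <> 0%C) /\
    forall x, Iv x0 x -> (c1 * Ps1 x + c2 * Ps2 x + c3 * Ps3 x)%C = 0%C.
Proof.
  intros Hk H0 Hb E1 E2 E3.
  destruct (split_eig k x0 mu Ps1 H0 E1) as [Ps1' [Ph1 [Ph1' [R11 [R12 [R13 [R14 [h11 [h12 [h13 h14]]]]]]]]]].
  destruct (split_eig k x0 mu Ps2 H0 E2) as [Ps2' [Ph2 [Ph2' [R21 [R22 [R23 [R24 [h21 [h22 [h23 h24]]]]]]]]]].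
  destruct (split_eig k x0 mu Ps3 H0 E3) as [Ps3' [Ph3 [Ph3' [R31 [R32 [R33 [R34 [h31 [h32 [h33 h34]]]]]]]]]].
  rewrite Hb in *.
  assert (S1 := CSys_base x0 _ _ _ _ _ _ ltac:(lra) R11 R12 R13 R14).
  assert (S2 := CSys_base x0 _ _ _ _ _ _ ltac:(lra) R21 R22 R23 R24).
  assert (S3 := CSys_base x0 _ _ _ _ _ _ ltac:(lra) R31 R32 R33 R34).
  destruct (lin23 (Ph1 x0) (Ph2 x0) (Ph3 x0) (Ph1' x0) (Ph2' x0) (Ph3' x0)) as [c1 [c2 [c3 [Hne [Ha Hb']]]]].
  exists c1, c2, c3. split; auto.
  assert (S := CSys_add x0 _ _ _ _ _ _ _ _ _ _ ltac:(lra)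
                 (CSys_add x0 _ _ _ _ _ _ _ _ _ _ ltac:(lra) (CSys_scal x0 _ _ c1 _ _ _ _ ltac:(lra) S1)
                    (CSys_scal x0 _ _ c2 _ _ _ _ ltac:(lra) S2)) (CSys_scal x0 _ _ c3 _ _ _ _ ltac:(lra) S3)).
  cbv beta in S.
  assert (V1 : (c1 * Ps1 x0 + c2 * Ps2 x0 + c3 * Ps3 x0)%C = 0%C) by (rewrite h11, h21, h31; ring).
  assert (V2 : (c1 * Ps1' x0 + c2 * Ps2' x0 + c3 * Ps3' x0)%C = 0%C) by (rewrite h13, h23, h33; ring).
  intros x Hx. apply C_eq0.
  - destruct (S 1%C) as [A B].
    rewrite <- Re_one. apply (uniq x0 (kkz k) (Re mu) _ _ _ _ H0 ltac:(left; apply kkz_pos; auto) A B); auto;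
      cbv beta; [rewrite V1| rewrite V2| rewrite Ha| rewrite Hb']; rewrite Cmult_0_r; reflexivity.
  - destruct (S (0, -1)%C) as [A B].
    rewrite <- Re_mi. apply (uniq x0 (kkz k) (Re mu) _ _ _ _ H0 ltac:(left; apply kkz_pos; auto) A B); auto;
      cbv beta; [rewrite V1| rewrite V2| rewrite Ha| rewrite Hb']; rewrite Cmult_0_r; reflexivity.
Qed.


Lemma build_seq (Pr : C -> Prop) mu :
  (forall eps, 0 < eps -> exists nu, Pr nu /\ nu <> mu /\ Cmod (nu - mu) < eps) ->
  forall n, exists (f : nat -> C) (d : R), 0 < d /\ d <= 1 /\
    (forall j, (j < n)%nat -> Pr (f j) /\ Cmod (f j - mu) < 1 /\ d <= Cmod (f j - mu)) /\
    (forall i j, (i < n)%nat -> (j < n)%nat -> i <> j -> f i <> f j).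
Proof.
  intros Hacc n. induction n.
  - exists (fun _ => mu), 1. split; [lra|split; [lra|split; intros; lia]].
  - destruct IHn as [f [d [Hd [Hd1 [Hf Hdist]]]]].
    destruct (Hacc d Hd) as [nu [Pnu [Hne Hlt]]].
    assert (Hpos : 0 < Cmod (nu - mu)).
    { destruct (Cmod_ge_0 (nu - mu)) as [|E]; auto. exfalso. apply Hne.
      symmetry in E. apply Cmod_eq_0 in E. replace nu with ((nu - mu) + mu)%C by ring. rewrite E. ring. }
    exists (fun j => if Nat.eq_dec j n then nu else f j), (Cmod (nu - mu)).
    split; auto. split; [lra|split].
    + intros j Hj. destruct (Nat.eq_dec j n) as [->|Hjn].
      * split; auto. split; lra.
      * destruct (Hf j ltac:(lia)) as [A [B C]]. split; auto. split; auto. lra.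
    + intros i j Hi Hj Hij.
      destruct (Nat.eq_dec i n) as [->|Hin]; destruct (Nat.eq_dec j n) as [->|Hjn].
      * lia.
      * destruct (Hf j ltac:(lia)) as [_ [_ C]]. intro E. rewrite <- E in C. lra.
      * destruct (Hf i ltac:(lia)) as [_ [_ C]]. intro E. rewrite E in C. lra.
      * apply Hdist; lia.
Qed.

Lemma isolated k x0 mu : k <> 0%Z -> 0 < x0 < 1 -> is_eigenvalue k x0 mu ->
  exists eps : R, 0 < eps /\
    forall nu : C, is_eigenvalue k x0 nu -> nu <> mu -> eps <= Cmod (nu - mu).
Proof.
  intros Hk H0 Hmu. apply NNPP. intro Hno.
  assert (Hacc : forall eps, 0 < eps -> exists nu, is_eigenvalue k x0 nu /\ nu <> mu /\ Cmod (nu - mu) < eps).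
  { intros eps Heps. apply NNPP. intro Hn. apply Hno. exists eps. split; auto.
    intros nu Hnu Hne. apply Rnot_lt_le. intro Hl. apply Hn. exists nu. auto. }
  destruct (eig_real k x0 mu Hk H0 Hmu) as [Hmb Hma].
  set (Rb := 1 - Re mu). assert (HRb : 0 < Rb) by (unfold Rb; lra).
  destruct (INR_unbounded (2 * x0 * (2 * x0 / (1 - x0 ^ 2)) * Rb)) as [n Hn].
  destruct (build_seq _ mu Hacc n) as [f [d [Hd [Hd1 [Hf Hdist]]]]].
  assert (Hdat : forall j, exists q : (R -> R) * ((R -> R) * ((R -> R) * (R -> R))),
     (j < n)%nat -> EigR x0 (kkz k) (Re (f j)) (fst q) (fst (snd q)) (fst (snd (snd q))) (snd (snd (snd q))) /\
        exists x1, Iv x0 x1 /\ fst q x1 <> 0).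
  { intros j. destruct (lt_dec j n) as [Hj|Hj].
    - destruct (Hf j Hj) as [Ej _].
      destruct (eig_data k x0 (f j) Hk H0 Ej) as [u [u' [P [P' [A B]]]]].
      exists (u, (u', (P, P'))). intros _. simpl. auto.
    - exists ((fun _ => 0), ((fun _ => 0), ((fun _ => 0), (fun _ => 0)))). intros; lia. }
  set (q := fun j => proj1_sig (constructive_indefinite_description _ (Hdat j))).
  assert (Hq : forall j, (j < n)%nat -> EigR x0 (kkz k) (Re (f j)) (fst (q j)) (fst (snd (q j))) (fst (snd (snd (q j)))) (snd (snd (snd (q j)))) /\
        exists x1, Iv x0 x1 /\ fst (q j) x1 <> 0).
  { intros j Hj. unfold q. destruct (constructive_indefinite_description _ (Hdat j)) as [qq Hqq]. simpl. auto. }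
  assert (Hc := count_bound x0 (kkz k) Rb n (fun j => Re (f j)) (fun j => fst (q j)) (fun j => fst (snd (q j)))
             (fun j => fst (snd (snd (q j)))) (fun j => snd (snd (snd (q j)))) H0 (kkz_pos k Hk) HRb).
  assert (INR n <= 2 * x0 * (2 * x0 / (1 - x0 ^ 2)) * Rb); [|lra].
  apply Hc.
  - intros j Hj. destruct (Hq j Hj) as [A B]. split; auto. split; auto.
    destruct (Hf j Hj) as [_ [Hlt _]].
    assert (Hre := re_le_Cmod (f j - mu)%C). rewrite Re_minus in Hre.
    unfold Rb. revert Hre. unfold Rabs; destruct Rcase_abs; lra.
  - intros i j Hi Hj Hij E. apply (Hdist i j Hi Hj Hij).
    destruct (Hf i Hi) as [Ei _]. destruct (Hf j Hj) as [Ej _].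
    destruct (eig_real k x0 _ Hk H0 Ei) as [Ii _]. destruct (eig_real k x0 _ Hk H0 Ej) as [Ij _].
    destruct (f i) as [r1 s1], (f j) as [r2 s2]. simpl in *. subst. reflexivity.
Qed.

Theorem proposition3 (k : Z) (x0 : R) :
  k <> 0%Z -> 0 < x0 < 1 ->
  forall mu : C, is_eigenvalue k x0 mu ->
    (exists eps : R, 0 < eps /\
       forall nu : C, is_eigenvalue k x0 nu -> nu <> mu -> eps <= Cmod (nu - mu)) /\
    Im mu = 0 /\ Re mu < 0 /\
    (forall Psi1 Psi2 Psi3 : R -> C,
       in_eigenspace k x0 mu Psi1 ->
       in_eigenspace k x0 mu Psi2 ->
       in_eigenspace k x0 mu Psi3 ->
       exists c1 c2 c3 : C,
         (c1 <> 0%C \/ c2 <> 0%C \/ c3 <> 0%C) /\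
         forall x, Iv x0 x -> (c1 * Psi1 x + c2 * Psi2 x + c3 * Psi3 x)%C = 0%C).
Proof.
  intros Hk H0 mu Hmu.
  destruct (eig_real k x0 mu Hk H0 Hmu) as [Hb Ha].
  split; [apply isolated; auto|]. split; auto. split; auto.
  intros. apply dim2 with k mu; auto.
Qed.
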